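(* Let $\omega>0$ and consider the saturated oscillator $\dot x=A_0x-B\,\mathrm{sat}(Kx)$ with $x\in\mathbb{R}^2$, $A_0=\begin{bmatrix}0&\omega\\-\omega&0\end{bmatrix}$, $B=\begin{bmatrix}0\\ \omega\end{bmatrix}$, $K=[k_1\ k_2]$. The origin is globally asymptotically stable if and only if $k_1>-1$ and $k_2>0$.
   Context: $\mathrm{sat}(s)=\min\{\overline{u},\max\{-\underline{u},s\}\}$ with $\overline{u},\underline{u}>0$. *)

(* Defs.v *)
From Stdlib Require Import Reals.
From Coquelicot Require Import Coquelicot.
Open Scope R_scope.

Definition sat (ubar ulow s : R) : R := Rmin ubar (Rmax (- ulow) s).

Definition norm2 (a b : R) : R := sqrt (a ^ 2 + b ^ 2).

(* (x1, x2) is a solution of  xdot = A0 x - B sat(K x),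
   A0 = [[0, w], [-w, 0]], B = [0; w], K = [k1 k2]:
     x1' = w x2
     x2' = -w x1 - w sat(k1 x1 + k2 x2). *)
Definition is_solution (w k1 k2 ubar ulow : R) (x1 x2 : R -> R) : Prop :=
  forall t : R,
    is_derive x1 t (w * x2 t) /\
    is_derive x2 t (- w * x1 t - w * sat ubar ulow (k1 * x1 t + k2 * x2 t)).

Definition GAS (w k1 k2 ubar ulow : R) : Prop :=
  (forall eps : R, 0 < eps -> exists delta : R, 0 < delta /\
     forall x1 x2 : R -> R, is_solution w k1 k2 ubar ulow x1 x2 ->
       norm2 (x1 0) (x2 0) < delta ->
       forall t : R, 0 <= t -> norm2 (x1 t) (x2 t) < eps)
  /\
  (forall x1 x2 : R -> R, is_solution w k1 k2 ubar ulow x1 x2 ->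
     is_lim x1 p_infty 0 /\ is_lim x2 p_infty 0).

(* Main.v *)
Require Import Defs.
From Stdlib Require Import Reals Lra Lia Factorial ClassicalEpsilon.
From Coquelicot Require Import Coquelicot.
Open Scope R_scope.

Lemma D_plus (f g : R -> R) (x a b : R) : is_derive f x a -> is_derive g x b ->
  is_derive (fun t => f t + g t) x (a + b).
Proof. intros. apply (is_derive_plus f g x a b); auto. Qed.
Lemma D_minus (f g : R -> R) (x a b : R) : is_derive f x a -> is_derive g x b ->
  is_derive (fun t => f t - g t) x (a - b).
Proof. intros. apply (is_derive_minus f g x a b); auto. Qed.
Lemma D_mult (f g : R -> R) (x a b : R) : is_derive f x a -> is_derive g x b ->
  is_derive (fun t => f t * g t) x (a * g x + f x * b).
Proof. intros. apply (is_derive_mult f g x a b); auto. intros; apply Rmult_comm. Qed.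
Lemma D_scal (k : R) (f : R -> R) (x a : R) : is_derive f x a -> is_derive (fun t => k * f t) x (k * a).
Proof. intros. apply is_derive_scal; auto. Qed.
Lemma D_const (c x : R) : is_derive (fun _ => c) x 0.
Proof. apply (is_derive_const c x). Qed.
Lemma D_id (x : R) : is_derive (fun t => t) x 1.
Proof. apply (is_derive_id x). Qed.
Lemma D_comp (f g : R -> R) x a b : is_derive f (g x) a -> is_derive g x b ->
  is_derive (fun t => f (g t)) x (b * a).
Proof. intros. apply (is_derive_comp f g x a b); auto. Qed.
Lemma D_ext (f g : R -> R) (x l : R) : (forall t, f t = g t) -> is_derive f x l -> is_derive g x l.
Proof. intros. apply (is_derive_ext f g); auto. Qed.
Lemma D_eq (f : R -> R) (x l l' : R) : l = l' -> is_derive f x l -> is_derive f x l'.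
Proof. intros ->; auto. Qed.

Lemma der_cont (f : R -> R) (x l : R) : is_derive f x l -> continuity_pt f x.
Proof. intros H. apply continuity_pt_filterlim. apply (@ex_derive_continuous R_AbsRing R_NormedModule f x). exists l; exact H. Qed.

Lemma nonincr (q dq : R -> R) a b : a <= b ->
  (forall x, a <= x <= b -> is_derive q x (dq x)) ->
  (forall x, a <= x <= b -> dq x <= 0) -> q b <= q a.
Proof.
  intros Hab Hd Hn. destruct (Req_dec a b) as [->|Hne]; [lra|].
  destruct (MVT_gen q a b dq) as [c [Hc Heq]].
  - intros x Hx. rewrite Rmin_left in Hx by lra. rewrite Rmax_right in Hx by lra. apply Hd; lra.
  - intros x Hx. rewrite Rmin_left in Hx by lra. rewrite Rmax_right in Hx by lra.
    apply (der_cont q x (dq x)). apply Hd; lra.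
  - rewrite Rmin_left in Hc by lra. rewrite Rmax_right in Hc by lra.
    specialize (Hn c Hc). nra.
Qed.

Lemma nondecr (q dq : R -> R) a b : a <= b ->
  (forall x, a <= x <= b -> is_derive q x (dq x)) ->
  (forall x, a <= x <= b -> 0 <= dq x) -> q a <= q b.
Proof.
  intros Hab Hd Hn.
  assert (H := nonincr (fun t => - q t) (fun t => - dq t) a b Hab).
  cut (- q b <= - q a). lra. apply H.
  - intros x Hx. apply (D_ext (fun t => -1 * q t) (fun t => - q t)). intros; ring.
    apply (D_eq _ _ (-1 * dq x)). ring. apply D_scal. auto.
  - intros x Hx. specialize (Hn x Hx). lra.
Qed.

Lemma cont_eps (f : R -> R) x : continuity_pt f x ->
  forall eps, 0 < eps -> exists d, 0 < d /\ forall y, Rabs (y - x) < d -> Rabs (f y - f x) < eps.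
Proof.
  intros H eps He. pose proof (proj1 (continuity_pt_locally f x) H (mkposreal eps He)) as [d Hd]. exists d. split. apply cond_pos.
  intros y Hy. apply Hd. exact Hy.
Qed.

Lemma eps_cont (f : R -> R) x :
  (forall eps, 0 < eps -> exists d, 0 < d /\ forall y, Rabs (y - x) < d -> Rabs (f y - f x) < eps)
  -> continuity_pt f x.
Proof.
  intros H. apply (proj2 (continuity_pt_locally f x)). intros eps.
  destruct (H eps (cond_pos eps)) as [d [Hd Hy]]. exists (mkposreal d Hd).
  intros y Hb. apply Hy. exact Hb.
Qed.

Lemma cont_continuous (f : R -> R) (x : R) : continuity_pt f x -> continuous f x.
Proof. intros H. apply continuity_pt_filterlim. auto. Qed.


Definition lip2 (f : R -> R -> R) (L : R) := forall a b c d,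
  Rabs (f a b - f c d) <= L * (Rabs (a - c) + Rabs (b - d)).

Lemma lip_cont (f : R -> R -> R) L (u v : R -> R) t : 0 <= L -> lip2 f L ->
  continuity_pt u t -> continuity_pt v t -> continuity_pt (fun s => f (u s) (v s)) t.
Proof.
  intros HL Hf Hu Hv. apply eps_cont. intros eps He.
  set (e' := eps / (2 * (L + 1))).
  assert (He' : 0 < e') by (unfold e'; apply Rdiv_lt_0_compat; lra).
  assert (Hee : 2 * (L + 1) * e' = eps) by (unfold e'; field; lra).
  destruct (cont_eps u t Hu e' He') as [d1 [Hd1 H1]].
  destruct (cont_eps v t Hv e' He') as [d2 [Hd2 H2]].
  exists (Rmin d1 d2). split. apply Rmin_pos; auto. intros y Hy.
  assert (A1 := H1 y (Rlt_le_trans _ _ _ Hy (Rmin_l _ _))).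
  assert (A2 := H2 y (Rlt_le_trans _ _ _ Hy (Rmin_r _ _))).
  eapply Rle_lt_trans. apply Hf.
  assert (0 <= Rabs (u y - u t)) by apply Rabs_pos.
  assert (0 <= Rabs (v y - v t)) by apply Rabs_pos.
  nra.
Qed.

Fixpoint pic (f1 f2 : R -> R -> R) (p1 p2 : R) (n : nat) : (R -> R) * (R -> R) :=
  match n with
  | O => (fun _ => p1, fun _ => p2)
  | S m => let X := pic f1 f2 p1 p2 m in
      (fun t => p1 + RInt (fun s => f1 (fst X s) (snd X s)) 0 t,
       fun t => p2 + RInt (fun s => f2 (fst X s) (snd X s)) 0 t)
  end.

Lemma exRInt (g : R -> R) a b : (forall s, continuity_pt g s) -> ex_RInt g a b.
Proof. intros Hg. apply (@ex_RInt_continuous R_CompleteNormedModule). intros z _. apply cont_continuous; auto. Qed.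

Lemma ftc (g : R -> R) (c t : R) : (forall s, continuity_pt g s) ->
  is_derive (fun t => c + RInt g 0 t) t (g t).
Proof.
  intros Hg. apply (D_eq _ _ (0 + g t)). ring. apply D_plus. apply D_const.
  apply (is_derive_RInt g (RInt g 0) 0 t).
  - apply filter_forall. intros b. apply (@RInt_correct R_CompleteNormedModule). apply exRInt; auto.
  - apply cont_continuous; auto.
Qed.

Lemma RInt_minusR (f g : R -> R) a b : ex_RInt f a b -> ex_RInt g a b ->
  RInt (fun x => f x - g x) a b = RInt f a b - RInt g a b.
Proof. intros Hf Hg. exact (RInt_minus f g a b Hf Hg). Qed.

Lemma RInt_zero (g : R -> R) : RInt g 0 0 = 0.
Proof. exact (RInt_point 0 g). Qed.

Lemma RInt_abs_bound (g : R -> R) t M : (forall s, continuity_pt g s) ->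
  (forall s, Rabs s <= Rabs t -> Rabs (g s) <= M) -> Rabs (RInt g 0 t) <= Rabs t * M.
Proof.
  intros Hg HM. destruct (Rle_dec 0 t) as [Ht|Ht].
  - rewrite (Rabs_pos_eq t) by lra. replace t with (t - 0) at 2 by ring.
    apply (abs_RInt_le_const g 0 t M). lra. apply exRInt; auto.
    intros s Hs. apply HM. rewrite !Rabs_pos_eq; lra.
  - rewrite (Rabs_left t) by lra.
    rewrite <- (opp_RInt_swap g t 0) by (apply exRInt; auto).
    change (Rabs (- RInt g t 0) <= - t * M). rewrite Rabs_Ropp.
    replace (- t) with (0 - t) by ring.
    apply (abs_RInt_le_const g t 0 M). lra. apply exRInt; auto.
    intros s Hs. apply HM. rewrite (Rabs_left t) by lra. unfold Rabs; destruct Rcase_abs; lra.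
Qed.


Lemma pic_S f1 f2 p1 p2 n :
  pic f1 f2 p1 p2 (S n) =
  (fun t => p1 + RInt (fun s => f1 (fst (pic f1 f2 p1 p2 n) s) (snd (pic f1 f2 p1 p2 n) s)) 0 t,
   fun t => p2 + RInt (fun s => f2 (fst (pic f1 f2 p1 p2 n) s) (snd (pic f1 f2 p1 p2 n) s)) 0 t).
Proof. reflexivity. Qed.

Lemma pic_cont f1 f2 L p1 p2 : 0 <= L -> lip2 f1 L -> lip2 f2 L ->
  forall n t, continuity_pt (fst (pic f1 f2 p1 p2 n)) t /\ continuity_pt (snd (pic f1 f2 p1 p2 n)) t.
Proof.
  intros HL H1 H2 n. induction n as [|n IH]; intros t.
  - simpl. split; apply (der_cont _ _ 0); apply D_const.
  - rewrite pic_S. simpl. split.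
    + eapply der_cont. apply ftc. intros s. apply (lip_cont f1 L); auto; apply IH.
    + eapply der_cont. apply ftc. intros s. apply (lip_cont f2 L); auto; apply IH.
Qed.

Lemma pic_der f1 f2 L p1 p2 : 0 <= L -> lip2 f1 L -> lip2 f2 L ->
  forall n t,
  is_derive (fst (pic f1 f2 p1 p2 (S n))) t
     (f1 (fst (pic f1 f2 p1 p2 n) t) (snd (pic f1 f2 p1 p2 n) t)) /\
  is_derive (snd (pic f1 f2 p1 p2 (S n))) t
     (f2 (fst (pic f1 f2 p1 p2 n) t) (snd (pic f1 f2 p1 p2 n) t)).
Proof.
  intros HL H1 H2 n t. rewrite pic_S. simpl. split.
  - apply (ftc (fun s => f1 (fst (pic f1 f2 p1 p2 n) s) (snd (pic f1 f2 p1 p2 n) s))).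
    intros s. apply (lip_cont f1 L); auto; apply (pic_cont f1 f2 L); auto.
  - apply (ftc (fun s => f2 (fst (pic f1 f2 p1 p2 n) s) (snd (pic f1 f2 p1 p2 n) s))).
    intros s. apply (lip_cont f2 L); auto; apply (pic_cont f1 f2 L); auto.
Qed.

Lemma pic_0 f1 f2 p1 p2 n : fst (pic f1 f2 p1 p2 n) 0 = p1 /\ snd (pic f1 f2 p1 p2 n) 0 = p2.
Proof. destruct n; simpl. auto. rewrite !RInt_zero. split; ring. Qed.

Lemma D_powfact (K : R) (m : nat) u :
  is_derive (fun u => K * u ^ (S m) / INR (Factorial.fact (S m))) u (K * u ^ m / INR (Factorial.fact m)).
Proof.
  apply (D_eq _ _ (K / INR (Factorial.fact (S m)) * (INR (S m) * 1 * u ^ Init.Nat.pred (S m)))).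
  - simpl pred. rewrite fact_simpl, mult_INR. field. split. apply INR_fact_neq_0.
    apply not_0_INR. lia.
  - apply (D_ext (fun u => K / INR (Factorial.fact (S m)) * (u ^ S m))). intros; unfold Rdiv; ring.
    apply D_scal. apply is_derive_pow. apply D_id.
Qed.

Lemma cmp_pos (h dh : R -> R) (K : R) (m : nat) t : 0 <= t -> h 0 = 0 ->
  (forall s, is_derive h s (dh s)) ->
  (forall s, 0 <= s <= t -> Rabs (dh s) <= K * s ^ m / INR (Factorial.fact m)) ->
  Rabs (h t) <= K * t ^ (S m) / INR (Factorial.fact (S m)).
Proof.
  intros Ht H0 Hd Hb.
  set (Phi := fun u => K * u ^ (S m) / INR (Factorial.fact (S m))).
  assert (P0 : Phi 0 = 0) by (unfold Phi; simpl; unfold Rdiv; ring).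
  assert (A := nonincr (fun u => h u - Phi u) (fun u => dh u - K * u ^ m / INR (Factorial.fact m)) 0 t Ht).
  assert (B := nonincr (fun u => - h u - Phi u) (fun u => - dh u - K * u ^ m / INR (Factorial.fact m)) 0 t Ht).
  cbv beta in A, B. rewrite H0, P0 in A, B.
  assert (A' : h t - Phi t <= 0 - 0).
  { apply A. intros x _. apply D_minus. auto. apply D_powfact.
    intros x Hx. specialize (Hb x Hx). apply Rabs_le_between in Hb. lra. }
  assert (B' : - h t - Phi t <= - 0 - 0).
  { apply B. intros x _. apply D_minus. apply (D_ext (fun u => -1 * h u)). intros; ring.
    apply (D_eq _ _ (-1 * dh x)). ring. apply D_scal. auto. apply D_powfact.
    intros x Hx. specialize (Hb x Hx). apply Rabs_le_between in Hb. lra. }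
  apply Rabs_le. unfold Phi in A', B'. lra.
Qed.

Lemma cmp_all (h dh : R -> R) (K : R) (m : nat) t : h 0 = 0 ->
  (forall s, is_derive h s (dh s)) ->
  (forall s, Rabs (dh s) <= K * Rabs s ^ m / INR (Factorial.fact m)) ->
  Rabs (h t) <= K * Rabs t ^ (S m) / INR (Factorial.fact (S m)).
Proof.
  intros H0 Hd Hb. destruct (Rle_dec 0 t) as [Ht|Ht].
  - rewrite (Rabs_pos_eq t) by lra. apply (cmp_pos h dh); auto.
    intros s Hs. specialize (Hb s). rewrite (Rabs_pos_eq s) in Hb by lra. exact Hb.
  - rewrite (Rabs_left t) by lra.
    replace (h t) with ((fun u => h (- u)) (- t)) by (cbv beta; f_equal; ring).
    apply (cmp_pos (fun u => h (- u)) (fun u => - dh (- u)) K m (- t)). lra. cbv beta. rewrite Ropp_0; auto.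
    + intros s. apply (D_eq _ _ (-1 * dh (- s))). ring.
      apply (D_comp h (fun u => - u)). auto.
      apply (D_eq _ _ (-1 * 1)). ring. apply (D_ext (fun u => -1 * u)). intros; ring.
      apply D_scal, D_id.
    + intros s Hs. rewrite Rabs_Ropp. specialize (Hb (- s)).
      rewrite Rabs_Ropp, (Rabs_pos_eq s) in Hb by lra. exact Hb.
Qed.

Lemma RInt_constR (c a b : R) : RInt (fun _ => c) a b = (b - a) * c.
Proof. exact (RInt_const a b c). Qed.

Lemma e_bound f1 f2 L p1 p2 : 0 <= L -> lip2 f1 L -> lip2 f2 L -> forall n t,
  Rabs (fst (pic f1 f2 p1 p2 (S n)) t - fst (pic f1 f2 p1 p2 n) t) +
  Rabs (snd (pic f1 f2 p1 p2 (S n)) t - snd (pic f1 f2 p1 p2 n) t) <=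
  (Rabs (f1 p1 p2) + Rabs (f2 p1 p2)) * (2 * L) ^ n * Rabs t ^ (S n) / INR (Factorial.fact (S n)).
Proof.
  intros HL H1 H2 n. induction n as [|n IH]; intros t.
  - simpl. rewrite !RInt_constR. simpl.
    replace (p1 + (t - 0) * f1 p1 p2 - p1) with (t * f1 p1 p2) by ring.
    replace (p2 + (t - 0) * f2 p1 p2 - p2) with (t * f2 p1 p2) by ring.
    rewrite !Rabs_mult. replace (INR (1 * 1)) with 1 by (simpl; ring). lra.
  - set (C := Rabs (f1 p1 p2) + Rabs (f2 p1 p2)) in *.
    assert (HC : 0 <= C) by (unfold C; assert (0 <= Rabs (f1 p1 p2)) by apply Rabs_pos;
                               assert (0 <= Rabs (f2 p1 p2)) by apply Rabs_pos; lra).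
    set (K := L * (C * (2 * L) ^ n)).
    assert (Hcomp : forall (g : R -> R -> R) (proj : (R -> R) * (R -> R) -> R -> R),
      lip2 g L ->
      (forall s, is_derive (proj (pic f1 f2 p1 p2 (S (S n)))) s
          (g (fst (pic f1 f2 p1 p2 (S n)) s) (snd (pic f1 f2 p1 p2 (S n)) s))) ->
      (forall s, is_derive (proj (pic f1 f2 p1 p2 (S n))) s
          (g (fst (pic f1 f2 p1 p2 n) s) (snd (pic f1 f2 p1 p2 n) s))) ->
      proj (pic f1 f2 p1 p2 (S (S n))) 0 - proj (pic f1 f2 p1 p2 (S n)) 0 = 0 ->
      Rabs (proj (pic f1 f2 p1 p2 (S (S n))) t - proj (pic f1 f2 p1 p2 (S n)) t)
        <= K * Rabs t ^ (S (S n)) / INR (Factorial.fact (S (S n)))).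
    { intros g proj Hg Da Db Z.
      apply (cmp_all (fun s => proj (pic f1 f2 p1 p2 (S (S n))) s - proj (pic f1 f2 p1 p2 (S n)) s)
        (fun s => g (fst (pic f1 f2 p1 p2 (S n)) s) (snd (pic f1 f2 p1 p2 (S n)) s)
                - g (fst (pic f1 f2 p1 p2 n) s) (snd (pic f1 f2 p1 p2 n) s))).
      - exact Z.
      - intros s. apply D_minus; auto.
      - intros s. eapply Rle_trans. apply Hg.
        unfold K. replace (L * (C * (2 * L) ^ n) * Rabs s ^ S n / INR (Factorial.fact (S n)))
          with (L * (C * (2 * L) ^ n * Rabs s ^ S n / INR (Factorial.fact (S n)))) by (unfold Rdiv; ring).
        apply Rmult_le_compat_l; auto. }
    destruct (pic_0 f1 f2 p1 p2 (S (S n))) as [Z1 Z2].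
    destruct (pic_0 f1 f2 p1 p2 (S n)) as [Z1' Z2'].
    assert (A1 := Hcomp f1 fst H1 (fun s => proj1 (pic_der f1 f2 L p1 p2 HL H1 H2 (S n) s))
                   (fun s => proj1 (pic_der f1 f2 L p1 p2 HL H1 H2 n s)) ltac:(rewrite Z1, Z1'; ring)).
    assert (A2 := Hcomp f2 snd H2 (fun s => proj2 (pic_der f1 f2 L p1 p2 HL H1 H2 (S n) s))
                   (fun s => proj2 (pic_der f1 f2 L p1 p2 HL H1 H2 n s)) ltac:(rewrite Z2, Z2'; ring)).
    unfold K in A1, A2. replace ((2 * L) ^ S n) with (2 * L * (2 * L) ^ n) by (simpl; ring). unfold Rdiv in *. lra.
Qed.

Lemma telesc (Q b : nat -> R) (K : R) (N : nat) : 0 <= K ->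
  (forall k, (N <= k)%nat -> Rabs (Q (S k) - Q k) <= K * b k) ->
  (forall k, (N <= k)%nat -> b (S k) <= b k / 2) ->
  forall n j, (N <= n)%nat -> Rabs (Q (n + j)%nat - Q n) + 2 * K * b (n + j)%nat <= 2 * K * b n.
Proof.
  intros HK HQ Hb n j Hn. induction j as [|j IH].
  - rewrite Nat.add_0_r. unfold Rminus; rewrite Rplus_opp_r, Rabs_R0. lra.
  - rewrite Nat.add_succ_r.
    assert (A := HQ (n+j)%nat ltac:(lia)). assert (B := Hb (n+j)%nat ltac:(lia)).
    assert (T: Rabs (Q (S (n+j)) - Q n) <= Rabs (Q (S (n + j)) - Q (n+j)%nat) + Rabs (Q (n+j)%nat - Q n)).
    { replace (Q (S (n+j)) - Q n) with ((Q (S (n + j)) - Q (n+j)%nat) + (Q (n+j)%nat - Q n)) by ring.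
      apply Rabs_triang. }
    assert (K * b (S (n+j)) <= K * (b (n+j)%nat / 2)) by (apply Rmult_le_compat_l; auto).
    lra.
Qed.

Lemma seq_lim (Q b : nat -> R) (K : R) (N : nat) : 0 <= K -> (forall k, 0 <= b k) ->
  (forall k, (N <= k)%nat -> Rabs (Q (S k) - Q k) <= K * b k) ->
  (forall k, (N <= k)%nat -> b (S k) <= b k / 2) ->
  Un_cv b 0 ->
  is_lim_seq Q (real (Lim_seq Q)) /\
  forall n, (N <= n)%nat -> Rabs (real (Lim_seq Q) - Q n) <= 2 * K * b n.
Proof.
  intros HK Hb0 HQ Hb Hcv.
  assert (T := telesc Q b K N HK HQ Hb).
  assert (T' : forall n m, (N <= n)%nat -> (n <= m)%nat -> Rabs (Q m - Q n) <= 2 * K * b n).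
  { intros n m Hn Hm. replace m with (n + (m - n))%nat by lia.
    specialize (T n (m - n)%nat Hn).
    assert (0 <= 2 * K * b (n + (m - n))%nat) by (specialize (Hb0 (n + (m-n))%nat); nra). lra. }
  assert (Hlim : is_lim_seq Q (Finite (real (Lim_seq Q)))).
  { apply Lim_seq_correct'. apply ex_lim_seq_cauchy_corr. intros eps.
    destruct (Hcv (eps / (4 * K + 1))) as [M HM].
    { apply Rdiv_lt_0_compat. apply cond_pos. lra. }
    exists (N + M)%nat. intros n m Hn Hm.
    specialize (HM (N + M)%nat ltac:(lia)). unfold R_dist in HM.
    rewrite Rminus_0_r, Rabs_pos_eq in HM by auto.
    assert (Hb' : (4 * K + 1) * b (N + M)%nat < eps).
    { apply (Rmult_lt_compat_l (4 * K + 1)) in HM. 2: lra.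
      replace ((4 * K + 1) * (eps / (4 * K + 1))) with (pos eps) in HM by (field; lra). exact HM. }
    assert (A1 := T' (N + M)%nat n ltac:(lia) Hn).
    assert (A2 := T' (N + M)%nat m ltac:(lia) Hm).
    replace (Q n - Q m) with ((Q n - Q (N + M)%nat) - (Q m - Q (N + M)%nat)) by ring.
    eapply Rle_lt_trans. apply Rabs_triang. rewrite Rabs_Ropp.
    specialize (Hb0 (N + M)%nat). nra. }
  split. exact Hlim.
  - intros n Hn. apply le_epsilon. intros eps He.
    assert (Hl2 := Hlim).
    apply is_lim_seq_spec in Hl2. destruct (Hl2 (mkposreal eps He)) as [M HM]. simpl in HM.
    specialize (HM (n + M)%nat ltac:(lia)).
    specialize (T' n (n + M)%nat Hn ltac:(lia)).
    replace (real (Lim_seq Q) - Q n) with (- (Q (n + M)%nat - real (Lim_seq Q)) + (Q (n + M)%nat - Q n)) by ring.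
    eapply Rle_trans. apply Rabs_triang. rewrite Rabs_Ropp. lra.
Qed.

Definition bb (A : R) (n : nat) := A ^ n / INR (Factorial.fact n).

Lemma bb_nonneg A n : 0 <= A -> 0 <= bb A n.
Proof. intros. unfold bb. apply Rdiv_le_0_compat. apply pow_le; auto. apply INR_fact_lt_0. Qed.

Lemma bb_half A N : 0 <= A -> 2 * A <= INR N -> forall k, (N <= k)%nat -> bb A (S k) <= bb A k / 2.
Proof.
  intros HA HN k Hk. unfold bb. rewrite fact_simpl, mult_INR. simpl pow.
  assert (Hk' : INR N <= INR k) by (apply le_INR; auto).
  assert (HF := INR_fact_lt_0 k). assert (HS : 0 < INR (S k)) by (apply lt_0_INR; lia).
  rewrite S_INR in *.
  assert (0 <= A ^ k) by (apply pow_le; auto).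
  apply (Rmult_le_reg_r ((INR k + 1) * INR (Factorial.fact k))). nra.
  replace (A * A ^ k / ((INR k + 1) * INR (Factorial.fact k)) * ((INR k + 1) * INR (Factorial.fact k)))
    with (A * A ^ k) by (field; lra).
  replace (A ^ k / INR (Factorial.fact k) / 2 * ((INR k + 1) * INR (Factorial.fact k)))
    with (A ^ k * (INR k + 1) / 2) by (field; lra).
  nra.
Qed.

Lemma bb_cv A : Un_cv (fun n => bb A n) 0.
Proof. apply cv_speed_pow_fact. Qed.

Lemma e_unif L C U s n : 0 <= L -> 0 <= C -> Rabs s <= U ->
  C * (2 * L) ^ n * Rabs s ^ (S n) / INR (Factorial.fact (S n)) <= (C * U) * bb (2 * L * U) n.
Proof.
  intros HL HC Hs. unfold bb. assert (Hs0 := Rabs_pos s).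
  assert (P1 : (2 * L * Rabs s) ^ n <= (2 * L * U) ^ n) by (apply pow_incr; split; nra).
  assert (P2 : 0 <= (2 * L * Rabs s) ^ n) by (apply pow_le; nra).
  assert (F1 : INR (Factorial.fact n) <= INR (Factorial.fact (S n))).
  { apply le_INR. rewrite fact_simpl. assert (H := lt_O_fact n). lia. }
  assert (F0 := INR_fact_lt_0 n).
  replace (C * (2 * L) ^ n * Rabs s ^ S n / INR (Factorial.fact (S n)))
    with (C * Rabs s * (2 * L * Rabs s) ^ n / INR (Factorial.fact (S n)))
    by (simpl pow; rewrite !Rpow_mult_distr; field; apply INR_fact_neq_0).
  unfold Rdiv.
  apply Rle_trans with (C * Rabs s * (2 * L * Rabs s) ^ n * / INR (Factorial.fact n)).
  - apply Rmult_le_compat_l. apply Rmult_le_pos; auto; apply Rmult_le_pos; auto. apply Rinv_le_contravar; auto.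
  - assert (Hi : 0 < / INR (Factorial.fact n)) by (apply Rinv_0_lt_compat; auto).
    assert (Q1 : C * Rabs s <= C * U) by (apply Rmult_le_compat_l; auto).
    assert (Q2 : (2 * L * Rabs s) ^ n * / INR (Factorial.fact n) <= (2 * L * U) ^ n * / INR (Factorial.fact n))
      by (apply Rmult_le_compat_r; lra).
    replace (C * Rabs s * (2 * L * Rabs s) ^ n * / INR (Factorial.fact n))
      with ((C * Rabs s) * ((2 * L * Rabs s) ^ n * / INR (Factorial.fact n))) by ring.
    apply Rmult_le_compat; auto. apply Rmult_le_pos; auto. apply Rmult_le_pos; lra.
Qed.

Definition sol1 f1 f2 p1 p2 t := real (Lim_seq (fun n => fst (pic f1 f2 p1 p2 n) t)).
Definition sol2 f1 f2 p1 p2 t := real (Lim_seq (fun n => snd (pic f1 f2 p1 p2 n) t)).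

Lemma unif f1 f2 L p1 p2 : 0 <= L -> lip2 f1 L -> lip2 f2 L -> forall U, 0 <= U ->
  exists N, forall s n, Rabs s <= U -> (N <= n)%nat ->
  Rabs (sol1 f1 f2 p1 p2 s - fst (pic f1 f2 p1 p2 n) s) <=
     2 * ((Rabs (f1 p1 p2) + Rabs (f2 p1 p2)) * U) * bb (2 * L * U) n /\
  Rabs (sol2 f1 f2 p1 p2 s - snd (pic f1 f2 p1 p2 n) s) <=
     2 * ((Rabs (f1 p1 p2) + Rabs (f2 p1 p2)) * U) * bb (2 * L * U) n.
Proof.
  intros HL H1 H2 U HU.
  set (C := Rabs (f1 p1 p2) + Rabs (f2 p1 p2)).
  assert (HC : 0 <= C) by (unfold C; assert (0 <= Rabs (f1 p1 p2)) by apply Rabs_pos;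
                               assert (0 <= Rabs (f2 p1 p2)) by apply Rabs_pos; lra).
  destruct (INR_archimed 1 (2 * (2 * L * U))) as [N HN]. lra.
  exists N. intros s n Hs Hn.
  assert (HA : 0 <= 2 * L * U) by nra.
  assert (Hh := bb_half (2 * L * U) N HA ltac:(lra)).
  assert (Hb0 := fun k => bb_nonneg (2 * L * U) k HA).
  assert (EB : forall k, Rabs (fst (pic f1 f2 p1 p2 (S k)) s - fst (pic f1 f2 p1 p2 k) s) +
                Rabs (snd (pic f1 f2 p1 p2 (S k)) s - snd (pic f1 f2 p1 p2 k) s) <= (C * U) * bb (2 * L * U) k).
  { intros k. eapply Rle_trans. apply (e_bound f1 f2 L p1 p2 HL H1 H2). apply e_unif; auto. }
  assert (HCU : 0 <= C * U) by nra.
  split.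
  - destruct (seq_lim (fun k => fst (pic f1 f2 p1 p2 k) s) (bb (2 * L * U)) (C * U) N HCU Hb0) as [_ B].
    + intros k _. specialize (EB k). assert (0 <= Rabs (snd (pic f1 f2 p1 p2 (S k)) s - snd (pic f1 f2 p1 p2 k) s)) by apply Rabs_pos. lra.
    + auto.
    + apply bb_cv.
    + apply B; auto.
  - destruct (seq_lim (fun k => snd (pic f1 f2 p1 p2 k) s) (bb (2 * L * U)) (C * U) N HCU Hb0) as [_ B].
    + intros k _. specialize (EB k). assert (0 <= Rabs (fst (pic f1 f2 p1 p2 (S k)) s - fst (pic f1 f2 p1 p2 k) s)) by apply Rabs_pos. lra.
    + auto.
    + apply bb_cv.
    + apply B; auto.
Qed.

Lemma small_B c A : 0 <= c -> forall eps, 0 < eps -> exists M, forall n, (M <= n)%nat -> c * bb A n < eps.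
Proof.
  intros Hc eps He. destruct (bb_cv A (eps / (c + 1))) as [M HM].
  apply Rdiv_lt_0_compat; lra.
  exists M. intros n Hn. specialize (HM n Hn). unfold R_dist in HM. rewrite Rminus_0_r in HM.
  apply Rle_lt_trans with ((c + 1) * Rabs (bb A n)).
  - assert (bb A n <= Rabs (bb A n)) by apply RRle_abs. assert (0 <= Rabs (bb A n)) by apply Rabs_pos. nra.
  - apply (Rmult_lt_compat_l (c + 1)) in HM. 2: lra.
    replace ((c + 1) * (eps / (c + 1))) with eps in HM by (field; lra). exact HM.
Qed.

Lemma unif_cont (X : R -> R) (Pn : nat -> R -> R) (t r : R) : 0 < r ->
  (forall n s, continuity_pt (Pn n) s) ->
  (forall eps, 0 < eps -> exists n, forall s, Rabs (s - t) < r -> Rabs (X s - Pn n s) < eps) ->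
  continuity_pt X t.
Proof.
  intros Hr Hc HX. apply eps_cont. intros eps He.
  destruct (HX (eps / 3)) as [n Hn]. lra.
  destruct (cont_eps (Pn n) t (Hc n t) (eps / 3)) as [d [Hd Hy]]. lra.
  exists (Rmin d r). split. apply Rmin_pos; auto. intros y Hyt.
  assert (A1 := Hn y (Rlt_le_trans _ _ _ Hyt (Rmin_r _ _))).
  assert (A2 := Hy y (Rlt_le_trans _ _ _ Hyt (Rmin_l _ _))).
  assert (A3 := Hn t ltac:(unfold Rminus; rewrite Rplus_opp_r, Rabs_R0; lra)).
  replace (X y - X t) with ((X y - Pn n y) + (Pn n y - Pn n t) - (X t - Pn n t)) by ring.
  unfold Rminus at 1. eapply Rle_lt_trans. apply Rabs_triang. rewrite Rabs_Ropp.
  eapply Rle_lt_trans. apply Rplus_le_compat_r. apply Rabs_triang. lra.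
Qed.


Lemma sol_cont f1 f2 L p1 p2 : 0 <= L -> lip2 f1 L -> lip2 f2 L -> forall t,
  continuity_pt (sol1 f1 f2 p1 p2) t /\ continuity_pt (sol2 f1 f2 p1 p2) t.
Proof.
  intros HL H1 H2 t. set (U := Rabs t + 1).
  assert (HU : 0 <= U) by (unfold U; assert (0 <= Rabs t) by apply Rabs_pos; lra).
  destruct (unif f1 f2 L p1 p2 HL H1 H2 U HU) as [N HN].
  set (C := Rabs (f1 p1 p2) + Rabs (f2 p1 p2)) in *.
  assert (HC : 0 <= C) by (unfold C; assert (0 <= Rabs (f1 p1 p2)) by apply Rabs_pos;
                               assert (0 <= Rabs (f2 p1 p2)) by apply Rabs_pos; lra).
  assert (HsU : forall s, Rabs (s - t) < 1 -> Rabs s <= U).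
  { intros s Hs. unfold U. replace s with ((s - t) + t) by ring.
    eapply Rle_trans. apply Rabs_triang. lra. }
  assert (Hc0 : 0 <= 2 * (C * U)) by nra.
  split.
  - apply (unif_cont _ (fun n => fst (pic f1 f2 p1 p2 n)) t 1). lra.
    intros n s. apply (pic_cont f1 f2 L); auto.
    intros eps He. destruct (small_B (2 * (C * U)) (2 * L * U) Hc0 eps He) as [M HM].
    exists (N + M)%nat. intros s Hs. eapply Rle_lt_trans.
    apply (HN s (N + M)%nat (HsU s Hs) ltac:(lia)). apply HM. lia.
  - apply (unif_cont _ (fun n => snd (pic f1 f2 p1 p2 n)) t 1). lra.
    intros n s. apply (pic_cont f1 f2 L); auto.
    intros eps He. destruct (small_B (2 * (C * U)) (2 * L * U) Hc0 eps He) as [M HM].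
    exists (N + M)%nat. intros s Hs. eapply Rle_lt_trans.
    apply (HN s (N + M)%nat (HsU s Hs) ltac:(lia)). apply HM. lia.
Qed.

Lemma eq_eps a b : (forall eps, 0 < eps -> Rabs (a - b) < eps) -> a = b.
Proof.
  intros H. destruct (Req_dec a b) as [E|E]; auto.
  assert (0 < Rabs (a - b)) by (apply Rabs_pos_lt; lra).
  specialize (H _ H0). lra.
Qed.

Lemma sol_int f1 f2 L p1 p2 : 0 <= L -> lip2 f1 L -> lip2 f2 L -> forall t,
  sol1 f1 f2 p1 p2 t = p1 + RInt (fun s => f1 (sol1 f1 f2 p1 p2 s) (sol2 f1 f2 p1 p2 s)) 0 t /\
  sol2 f1 f2 p1 p2 t = p2 + RInt (fun s => f2 (sol1 f1 f2 p1 p2 s) (sol2 f1 f2 p1 p2 s)) 0 t.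
Proof.
  intros HL H1 H2 t. set (U := Rabs t).
  assert (HU : 0 <= U) by (unfold U; apply Rabs_pos).
  destruct (unif f1 f2 L p1 p2 HL H1 H2 U HU) as [N HN].
  set (C := Rabs (f1 p1 p2) + Rabs (f2 p1 p2)) in *.
  assert (HC : 0 <= C) by (unfold C; assert (0 <= Rabs (f1 p1 p2)) by apply Rabs_pos;
                               assert (0 <= Rabs (f2 p1 p2)) by apply Rabs_pos; lra).
  set (c := 2 * (C * U) * (1 + 2 * U * L)).
  assert (Hc : 0 <= c) by (unfold c; apply Rmult_le_pos; nra).
  assert (HA : 0 <= 2 * L * U) by nra.
  assert (Hsc := sol_cont f1 f2 L p1 p2 HL H1 H2).
  assert (Hpc := pic_cont f1 f2 L p1 p2 HL H1 H2).
  assert (GEN : forall (g : R -> R -> R) (proj : (R -> R) * (R -> R) -> R -> R) (solg : R -> R) (pg : R),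
     lip2 g L ->
     (forall n, proj (pic f1 f2 p1 p2 (S n)) t = pg + RInt (fun s => g (fst (pic f1 f2 p1 p2 n) s) (snd (pic f1 f2 p1 p2 n) s)) 0 t) ->
     (forall n, (N <= n)%nat -> Rabs (solg t - proj (pic f1 f2 p1 p2 n) t) <= 2 * (C * U) * bb (2 * L * U) n) ->
     solg t = pg + RInt (fun s => g (sol1 f1 f2 p1 p2 s) (sol2 f1 f2 p1 p2 s)) 0 t).
  { intros g proj solg pg Hg Hpic Hb. apply eq_eps. intros eps He.
    destruct (small_B c (2 * L * U) Hc (eps / 2) ltac:(lra)) as [M HM].
    set (n := (N + M)%nat).
    assert (B1 := Hb (S n) ltac:(unfold n; lia)).
    assert (B1' := HM (S n) ltac:(unfold n; lia)).
    assert (B2' := HM n ltac:(unfold n; lia)).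
    assert (Hbn := bb_nonneg (2 * L * U) n HA). assert (HbSn := bb_nonneg (2 * L * U) (S n) HA).
    assert (I1 : Rabs (RInt (fun s => g (fst (pic f1 f2 p1 p2 n) s) (snd (pic f1 f2 p1 p2 n) s)) 0 t
                   - RInt (fun s => g (sol1 f1 f2 p1 p2 s) (sol2 f1 f2 p1 p2 s)) 0 t)
                 <= Rabs t * (L * (4 * (C * U) * bb (2 * L * U) n))).
    { rewrite <- RInt_minusR.
      2: { apply exRInt. intros s. apply (lip_cont g L); auto; apply Hpc. }
      2: { apply exRInt. intros s. apply (lip_cont g L); auto; apply Hsc. }
      apply RInt_abs_bound.
      - intros s. apply eps_cont. intros e He'.
        assert (Ca : continuity_pt (fun s => g (fst (pic f1 f2 p1 p2 n) s) (snd (pic f1 f2 p1 p2 n) s)) s)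
          by (apply (lip_cont g L); auto; apply Hpc).
        assert (Cb : continuity_pt (fun s => g (sol1 f1 f2 p1 p2 s) (sol2 f1 f2 p1 p2 s)) s)
          by (apply (lip_cont g L); auto; apply Hsc).
        destruct (cont_eps _ _ Ca (e / 2) ltac:(lra)) as [d1 [Hd1 Q1]].
        destruct (cont_eps _ _ Cb (e / 2) ltac:(lra)) as [d2 [Hd2 Q2]].
        exists (Rmin d1 d2). split. apply Rmin_pos; auto. intros y Hy.
        specialize (Q1 y (Rlt_le_trans _ _ _ Hy (Rmin_l _ _))).
        specialize (Q2 y (Rlt_le_trans _ _ _ Hy (Rmin_r _ _))).
        match goal with |- Rabs (?A - ?B - (?C - ?D)) < _ =>
          replace (A - B - (C - D)) with ((A - C) - (B - D)) by ring end.
        unfold Rminus at 1. eapply Rle_lt_trans. apply Rabs_triang. rewrite Rabs_Ropp. lra.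
      - intros s Hs. eapply Rle_trans. apply Hg.
        destruct (HN s n Hs ltac:(unfold n; lia)) as [E1 E2].
        rewrite (Rabs_minus_sym (fst _ s)), (Rabs_minus_sym (snd _ s)).
        apply Rmult_le_compat_l; auto. lra. }
    rewrite Hpic in B1.
    replace (solg t - (pg + RInt (fun s => g (sol1 f1 f2 p1 p2 s) (sol2 f1 f2 p1 p2 s)) 0 t))
      with ((solg t - (pg + RInt (fun s => g (fst (pic f1 f2 p1 p2 n) s) (snd (pic f1 f2 p1 p2 n) s)) 0 t))
            + (RInt (fun s => g (fst (pic f1 f2 p1 p2 n) s) (snd (pic f1 f2 p1 p2 n) s)) 0 t
               - RInt (fun s => g (sol1 f1 f2 p1 p2 s) (sol2 f1 f2 p1 p2 s)) 0 t)) by ring.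
    eapply Rle_lt_trans. apply Rabs_triang.
    assert (2 * (C * U) * bb (2 * L * U) (S n) <= c * bb (2 * L * U) (S n)).
    { apply Rmult_le_compat_r; auto. unfold c. assert (0 <= 2 * U * L) by nra.
      assert (0 <= 2 * (C * U)) by nra. nra. }
    assert (Rabs t * (L * (4 * (C * U) * bb (2 * L * U) n)) <= c * bb (2 * L * U) n).
    { unfold c. fold U. assert (0 <= C * U) by nra. assert (0 <= C * U * bb (2 * L * U) n) by nra.
      nra. }
    lra. }
  split.
  - apply (GEN f1 fst (sol1 f1 f2 p1 p2) p1 H1). intros n; reflexivity. intros n Hn. exact (proj1 (HN t n (Rle_refl _) Hn)).
  - apply (GEN f2 snd (sol2 f1 f2 p1 p2) p2 H2). intros n; reflexivity. intros n Hn. exact (proj2 (HN t n (Rle_refl _) Hn)).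
Qed.

Theorem exist_sol f1 f2 L p1 p2 : 0 <= L -> lip2 f1 L -> lip2 f2 L ->
  exists x1 x2 : R -> R, x1 0 = p1 /\ x2 0 = p2 /\ forall t,
   is_derive x1 t (f1 (x1 t) (x2 t)) /\ is_derive x2 t (f2 (x1 t) (x2 t)).
Proof.
  intros HL H1 H2. exists (sol1 f1 f2 p1 p2), (sol2 f1 f2 p1 p2).
  assert (HI := sol_int f1 f2 L p1 p2 HL H1 H2).
  assert (Hsc := sol_cont f1 f2 L p1 p2 HL H1 H2).
  split. rewrite (proj1 (HI 0)), RInt_zero; ring.
  split. rewrite (proj2 (HI 0)), RInt_zero; ring.
  intros t. split.
  - apply (D_ext (fun t => p1 + RInt (fun s => f1 (sol1 f1 f2 p1 p2 s) (sol2 f1 f2 p1 p2 s)) 0 t)).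
    intros u. symmetry. apply HI.
    apply (ftc (fun s => f1 (sol1 f1 f2 p1 p2 s) (sol2 f1 f2 p1 p2 s))).
    intros s. apply (lip_cont f1 L); auto; apply Hsc.
  - apply (D_ext (fun t => p2 + RInt (fun s => f2 (sol1 f1 f2 p1 p2 s) (sol2 f1 f2 p1 p2 s)) 0 t)).
    intros u. symmetry. apply HI.
    apply (ftc (fun s => f2 (sol1 f1 f2 p1 p2 s) (sol2 f1 f2 p1 p2 s))).
    intros s. apply (lip_cont f2 L); auto; apply Hsc.
Qed.


Ltac satcase := unfold sat, Rmin, Rmax in *; repeat (destruct Rle_dec); try lra.

Lemma sat_mono ub ul a b : 0 < ub -> 0 < ul -> a <= b -> sat ub ul a <= sat ub ul b.
Proof. intros. satcase. Qed.

Lemma sat_lip ub ul a b : 0 < ub -> 0 < ul -> Rabs (sat ub ul a - sat ub ul b) <= Rabs (a - b).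
Proof. intros. unfold Rabs; repeat destruct Rcase_abs; satcase. Qed.

Lemma sat_0 ub ul : 0 < ub -> 0 < ul -> sat ub ul 0 = 0.
Proof. intros. satcase. Qed.

Lemma sat_low ub ul x : 0 < ub -> 0 < ul -> Rmin x 0 <= sat ub ul x.
Proof. intros. satcase. Qed.

Lemma sat_up ub ul x : 0 < ub -> 0 < ul -> sat ub ul x <= Rmax x 0.
Proof. intros. satcase. Qed.

Lemma sat_strict ub ul a b : 0 < ub -> 0 < ul -> - ul < a < ub ->
  sat ub ul b = sat ub ul a -> b = a.
Proof. intros. satcase. Qed.

Lemma sat_abs ub ul x : 0 < ub -> 0 < ul -> Rabs (sat ub ul x) <= Rabs x.
Proof.
  intros. replace (sat ub ul x) with (sat ub ul x - sat ub ul 0) by (rewrite sat_0; auto; ring).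
  replace x with (x - 0) at 2 by ring. apply sat_lip; auto.
Qed.

Definition F2 w k1 k2 ub ul a b := - w * a - w * sat ub ul (k1 * a + k2 * b).

Lemma F1_lip w L : Rabs w <= L -> lip2 (fun a b => w * b) L.
Proof.
  intros HL a b c d. rewrite <- Rmult_minus_distr_l, Rabs_mult.
  assert (0 <= Rabs (a - c)) by apply Rabs_pos. assert (0 <= Rabs (b - d)) by apply Rabs_pos.
  assert (0 <= Rabs w) by apply Rabs_pos. nra.
Qed.

Lemma F2_lip w k1 k2 ub ul : 0 < ub -> 0 < ul ->
  lip2 (F2 w k1 k2 ub ul) (Rabs w * (2 + Rabs k1 + Rabs k2)).
Proof.
  intros Hu Hl a b c d. unfold F2.
  replace (- w * a - w * sat ub ul (k1 * a + k2 * b) - (- w * c - w * sat ub ul (k1 * c + k2 * d)))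
    with (- w * (a - c) + - w * (sat ub ul (k1 * a + k2 * b) - sat ub ul (k1 * c + k2 * d))) by ring.
  eapply Rle_trans. apply Rabs_triang. rewrite !Rabs_mult, Rabs_Ropp.
  assert (S1 := sat_lip ub ul (k1 * a + k2 * b) (k1 * c + k2 * d) Hu Hl).
  replace (k1 * a + k2 * b - (k1 * c + k2 * d)) with (k1 * (a - c) + k2 * (b - d)) in S1 by ring.
  assert (S2 : Rabs (k1 * (a - c) + k2 * (b - d)) <= Rabs k1 * Rabs (a - c) + Rabs k2 * Rabs (b - d)).
  { rewrite <- !Rabs_mult. apply Rabs_triang. }
  assert (0 <= Rabs (a - c)) by apply Rabs_pos. assert (0 <= Rabs (b - d)) by apply Rabs_pos.
  assert (0 <= Rabs w) by apply Rabs_pos. assert (0 <= Rabs k1) by apply Rabs_pos.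
  assert (0 <= Rabs k2) by apply Rabs_pos.
  assert (Rabs w * Rabs (sat ub ul (k1 * a + k2 * b) - sat ub ul (k1 * c + k2 * d))
          <= Rabs w * (Rabs k1 * Rabs (a - c) + Rabs k2 * Rabs (b - d))).
  { apply Rmult_le_compat_l; auto. lra. }
  assert (0 <= Rabs w * (Rabs (a - c) + 2 * Rabs (b - d) + Rabs k1 * Rabs (b - d) + Rabs k2 * Rabs (a - c))).
  { apply Rmult_le_pos; auto. assert (0 <= Rabs k1 * Rabs (b - d)) by (apply Rmult_le_pos; auto).
    assert (0 <= Rabs k2 * Rabs (a - c)) by (apply Rmult_le_pos; auto). lra. }
  match goal with |- ?A + ?B <= ?C => 
    assert (C - (Rabs w * Rabs (a - c) + Rabs w * (Rabs k1 * Rabs (a - c) + Rabs k2 * Rabs (b - d)))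
      = Rabs w * (Rabs (a - c) + 2 * Rabs (b - d) + Rabs k1 * Rabs (b - d) + Rabs k2 * Rabs (a - c))) by ring end.
  lra.
Qed.

Lemma sys_exists w k1 k2 ub ul p1 p2 : 0 < ub -> 0 < ul ->
  exists x1 x2 : R -> R, x1 0 = p1 /\ x2 0 = p2 /\ is_solution w k1 k2 ub ul x1 x2.
Proof.
  intros Hu Hl. set (L := Rabs w * (2 + Rabs k1 + Rabs k2)).
  assert (0 <= Rabs w) by apply Rabs_pos. assert (0 <= Rabs k1) by apply Rabs_pos.
  assert (0 <= Rabs k2) by apply Rabs_pos.
  destruct (exist_sol (fun a b => w * b) (F2 w k1 k2 ub ul) L p1 p2) as [x1 [x2 [E1 [E2 E3]]]].
  - unfold L. nra.
  - apply F1_lip. unfold L. nra.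
  - apply F2_lip; auto.
  - exists x1, x2. split; [exact E1|split; [exact E2|exact E3]].
Qed.

Definition G k1 ub ul r := RInt (fun p => p + sat ub ul (k1 * p)) 0 r.
Definition V k1 ub ul a b := b * b / 2 + G k1 ub ul a.

Lemma gint_cont k1 ub ul s : 0 < ub -> 0 < ul -> continuity_pt (fun p => p + sat ub ul (k1 * p)) s.
Proof.
  intros Hu Hl. apply eps_cont. intros eps He.
  exists (eps / (1 + Rabs k1 + 1)). split. apply Rdiv_lt_0_compat; auto.
  assert (0 <= Rabs k1) by apply Rabs_pos. lra.
  intros y Hy. replace (y + sat ub ul (k1 * y) - (s + sat ub ul (k1 * s)))
    with ((y - s) + (sat ub ul (k1 * y) - sat ub ul (k1 * s))) by ring.
  eapply Rle_lt_trans. apply Rabs_triang.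
  assert (S1 := sat_lip ub ul (k1 * y) (k1 * s) Hu Hl).
  rewrite <- Rmult_minus_distr_l, Rabs_mult in S1.
  assert (0 <= Rabs k1) by apply Rabs_pos. assert (0 <= Rabs (y - s)) by apply Rabs_pos.
  assert (Rabs (y - s) * (1 + Rabs k1 + 1) < eps).
  { apply (Rmult_lt_compat_r (1 + Rabs k1 + 1)) in Hy. 2: lra.
    replace (eps / (1 + Rabs k1 + 1) * (1 + Rabs k1 + 1)) with eps in Hy by (field; lra). lra. }
  nra.
Qed.

Lemma G_der k1 ub ul r : 0 < ub -> 0 < ul -> is_derive (G k1 ub ul) r (r + sat ub ul (k1 * r)).
Proof.
  intros Hu Hl. apply (D_ext (fun t => 0 + RInt (fun p => p + sat ub ul (k1 * p)) 0 t)).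
  intros; unfold G; ring.
  apply (ftc (fun p => p + sat ub ul (k1 * p))). intros s. apply gint_cont; auto.
Qed.

Lemma G_0 k1 ub ul : G k1 ub ul 0 = 0.
Proof. unfold G. apply RInt_zero. Qed.

Lemma min_at0 (h dh : R -> R) : (forall r, is_derive h r (dh r)) ->
  (forall r, 0 <= r -> 0 <= dh r) -> (forall r, r <= 0 -> dh r <= 0) -> forall r, h 0 <= h r.
Proof.
  intros Hd Hp Hn r. destruct (Rle_dec 0 r).
  - apply (nondecr h dh); auto. intros x Hx; apply Hp; lra.
  - apply (nonincr h dh); auto. lra. intros x Hx; apply Hn; lra.
Qed.

Lemma G_upper k1 ub ul r : 0 < ub -> 0 < ul -> G k1 ub ul r <= (1 + Rabs k1) * (r * r) / 2.
Proof.
  intros Hu Hl.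
  assert (H := min_at0 (fun r => (1 + Rabs k1) * (r * r) / 2 - G k1 ub ul r)
                (fun r => (1 + Rabs k1) * r - (r + sat ub ul (k1 * r)))).
  cbv beta in H. rewrite G_0 in H.
  cut (0 <= (1 + Rabs k1) * (r * r) / 2 - G k1 ub ul r). lra.
  replace 0 with ((1 + Rabs k1) * (0 * 0) / 2 - 0) by field. apply H.
  - intros x. apply D_minus. 2: apply G_der; auto.
    apply (D_ext (fun x => (1 + Rabs k1) / 2 * (x * x))). intros; field.
    apply (D_eq _ _ ((1 + Rabs k1) / 2 * (1 * x + x * 1))). field.
    apply D_scal. apply D_mult; apply D_id.
  - intros x Hx. assert (A := sat_abs ub ul (k1 * x) Hu Hl). rewrite Rabs_mult, (Rabs_pos_eq x) in A by lra.
    assert (sat ub ul (k1 * x) <= Rabs (sat ub ul (k1 * x))) by apply RRle_abs. nra.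
  - intros x Hx. assert (A := sat_abs ub ul (k1 * x) Hu Hl). rewrite Rabs_mult, (Rabs_left1 x) in A by lra.
    assert (- sat ub ul (k1 * x) <= Rabs (sat ub ul (k1 * x))).
    { rewrite <- Rabs_Ropp. apply RRle_abs. }
    nra.
Qed.

Lemma key_pos k1 ub ul r : 0 < ub -> 0 < ul -> -1 < k1 -> 0 <= r ->
  Rmin 1 (1 + k1) * r <= r + sat ub ul (k1 * r).
Proof.
  intros Hu Hl Hk Hr. assert (A := sat_low ub ul (k1 * r) Hu Hl).
  unfold Rmin in *. repeat destruct Rle_dec; nra.
Qed.

Lemma key_neg k1 ub ul r : 0 < ub -> 0 < ul -> -1 < k1 -> r <= 0 ->
  r + sat ub ul (k1 * r) <= Rmin 1 (1 + k1) * r.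
Proof.
  intros Hu Hl Hk Hr. assert (A := sat_up ub ul (k1 * r) Hu Hl).
  unfold Rmin, Rmax in *. repeat destruct Rle_dec; nra.
Qed.

Lemma G_lower k1 ub ul r : 0 < ub -> 0 < ul -> -1 < k1 ->
  Rmin 1 (1 + k1) * (r * r) / 2 <= G k1 ub ul r.
Proof.
  intros Hu Hl Hk. set (c := Rmin 1 (1 + k1)).
  assert (H := min_at0 (fun r => G k1 ub ul r - c * (r * r) / 2)
                (fun r => (r + sat ub ul (k1 * r)) - c * r)).
  cbv beta in H. rewrite G_0 in H.
  cut (0 <= G k1 ub ul r - c * (r * r) / 2). lra.
  replace 0 with (0 - c * (0 * 0) / 2) by field. apply H.
  - intros x. apply D_minus. apply G_der; auto.
    apply (D_ext (fun x => c / 2 * (x * x))). intros; field.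
    apply (D_eq _ _ (c / 2 * (1 * x + x * 1))). field.
    apply D_scal. apply D_mult; apply D_id.
  - intros x Hx. assert (A := key_pos k1 ub ul x Hu Hl Hk Hx). fold c in A. lra.
  - intros x Hx. assert (A := key_neg k1 ub ul x Hu Hl Hk Hx). fold c in A. lra.
Qed.

Lemma V_der w k1 k2 ub ul x1 x2 t : 0 < ub -> 0 < ul -> is_solution w k1 k2 ub ul x1 x2 ->
  is_derive (fun t => V k1 ub ul (x1 t) (x2 t)) t
    (- w * x2 t * (sat ub ul (k1 * x1 t + k2 * x2 t) - sat ub ul (k1 * x1 t))).
Proof.
  intros Hu Hl Hs. destruct (Hs t) as [D1 D2]. unfold V.
  apply (D_eq _ _ (((- w * x1 t - w * sat ub ul (k1 * x1 t + k2 * x2 t)) * x2 t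
                    + x2 t * (- w * x1 t - w * sat ub ul (k1 * x1 t + k2 * x2 t))) / 2
                   + (w * x2 t) * (x1 t + sat ub ul (k1 * x1 t)))).
  field.
  apply D_plus.
  - apply (D_ext (fun t => / 2 * (x2 t * x2 t))). intros; field.
    apply (D_eq _ _ (/ 2 * ((- w * x1 t - w * sat ub ul (k1 * x1 t + k2 * x2 t)) * x2 t
                    + x2 t * (- w * x1 t - w * sat ub ul (k1 * x1 t + k2 * x2 t))))). field.
    apply D_scal. apply D_mult; auto.
  - apply (D_comp (G k1 ub ul) x1). apply G_der; auto. auto.
Qed.


Lemma V_dsign w k1 k2 ub ul a b : 0 < ub -> 0 < ul -> 0 < w -> 0 <= k2 ->
  - w * b * (sat ub ul (k1 * a + k2 * b) - sat ub ul (k1 * a)) <= 0.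
Proof.
  intros Hu Hl Hw Hk. destruct (Rle_dec 0 b).
  - assert (sat ub ul (k1 * a) <= sat ub ul (k1 * a + k2 * b)) by (apply sat_mono; auto; nra).
    assert (0 <= b * (sat ub ul (k1 * a + k2 * b) - sat ub ul (k1 * a))) by nra. nra.
  - assert (sat ub ul (k1 * a + k2 * b) <= sat ub ul (k1 * a)) by (apply sat_mono; auto; nra).
    assert (0 <= b * (sat ub ul (k1 * a + k2 * b) - sat ub ul (k1 * a))) by nra. nra.
Qed.

Lemma V_dsign' w k1 k2 ub ul a b : 0 < ub -> 0 < ul -> 0 < w -> k2 <= 0 ->
  0 <= - w * b * (sat ub ul (k1 * a + k2 * b) - sat ub ul (k1 * a)).
Proof.
  intros Hu Hl Hw Hk. destruct (Rle_dec 0 b).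
  - assert (sat ub ul (k1 * a + k2 * b) <= sat ub ul (k1 * a)) by (apply sat_mono; auto; nra).
    assert (b * (sat ub ul (k1 * a + k2 * b) - sat ub ul (k1 * a)) <= 0) by nra. nra.
  - assert (sat ub ul (k1 * a) <= sat ub ul (k1 * a + k2 * b)) by (apply sat_mono; auto; nra).
    assert (b * (sat ub ul (k1 * a + k2 * b) - sat ub ul (k1 * a)) <= 0) by nra. nra.
Qed.

Lemma V_mono w k1 k2 ub ul x1 x2 : 0 < ub -> 0 < ul -> 0 < w -> 0 <= k2 ->
  is_solution w k1 k2 ub ul x1 x2 -> forall t1 t2, t1 <= t2 ->
  V k1 ub ul (x1 t2) (x2 t2) <= V k1 ub ul (x1 t1) (x2 t1).
Proof.
  intros Hu Hl Hw Hk Hs t1 t2 Ht.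
  apply (nonincr (fun t => V k1 ub ul (x1 t) (x2 t))
    (fun t => - w * x2 t * (sat ub ul (k1 * x1 t + k2 * x2 t) - sat ub ul (k1 * x1 t)))); auto.
  intros x _. apply V_der; auto.
  intros x _. apply V_dsign; auto.
Qed.

Lemma V_incr w k1 k2 ub ul x1 x2 : 0 < ub -> 0 < ul -> 0 < w -> k2 <= 0 ->
  is_solution w k1 k2 ub ul x1 x2 -> forall t1 t2, t1 <= t2 ->
  V k1 ub ul (x1 t1) (x2 t1) <= V k1 ub ul (x1 t2) (x2 t2).
Proof.
  intros Hu Hl Hw Hk Hs t1 t2 Ht.
  apply (nondecr (fun t => V k1 ub ul (x1 t) (x2 t))
    (fun t => - w * x2 t * (sat ub ul (k1 * x1 t + k2 * x2 t) - sat ub ul (k1 * x1 t)))); auto.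
  intros x _. apply V_der; auto.
  intros x _. apply V_dsign'; auto.
Qed.

Lemma V_lower k1 ub ul a b : 0 < ub -> 0 < ul -> -1 < k1 ->
  Rmin 1 (1 + k1) / 2 * (a * a + b * b) <= V k1 ub ul a b.
Proof.
  intros Hu Hl Hk. unfold V. assert (A := G_lower k1 ub ul a Hu Hl Hk).
  assert (Rmin 1 (1 + k1) <= 1) by apply Rmin_l.
  assert (0 < Rmin 1 (1 + k1)) by (unfold Rmin; destruct Rle_dec; lra). nra.
Qed.

Lemma V_upper k1 ub ul a b : 0 < ub -> 0 < ul ->
  V k1 ub ul a b <= (1 + Rabs k1) / 2 * (a * a + b * b).
Proof.
  intros Hu Hl. unfold V. assert (A := G_upper k1 ub ul a Hu Hl).
  assert (0 <= Rabs k1) by apply Rabs_pos. nra.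
Qed.

Lemma norm2_sq a b : norm2 a b * norm2 a b = a * a + b * b.
Proof. unfold norm2. rewrite sqrt_sqrt. ring. nra. Qed.

Lemma norm2_lt a b e : 0 < e -> a * a + b * b < e * e -> norm2 a b < e.
Proof.
  intros He H. unfold norm2. rewrite <- (sqrt_square e) by lra. apply sqrt_lt_1; nra.
Qed.

Lemma norm2_lt_inv a b e : norm2 a b < e -> a * a + b * b < e * e.
Proof.
  intros H. rewrite <- norm2_sq. assert (0 <= norm2 a b) by apply sqrt_pos. nra.
Qed.

Lemma lim_of_eps (f : R -> R) :
  (forall eps, 0 < eps -> exists T, forall t, T < t -> Rabs (f t) < eps) -> is_lim f p_infty 0.
Proof.
  intros H. apply is_lim_spec. intros eps. destruct (H eps (cond_pos eps)) as [T HT].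
  exists T. intros t Ht. rewrite Rminus_0_r. auto.
Qed.

Lemma eps_of_lim (f : R -> R) : is_lim f p_infty 0 ->
  forall eps, 0 < eps -> exists T, forall t, T < t -> Rabs (f t) < eps.
Proof.
  intros H eps He. apply is_lim_spec in H. destruct (H (mkposreal eps He)) as [T HT].
  exists T. intros t Ht. specialize (HT t Ht). simpl in HT. rewrite Rminus_0_r in HT. auto.
Qed.

Lemma shift_sol w k1 k2 ub ul x1 x2 T : is_solution w k1 k2 ub ul x1 x2 ->
  is_solution w k1 k2 ub ul (fun s => x1 (T + s)) (fun s => x2 (T + s)).
Proof.
  intros Hs t. destruct (Hs (T + t)) as [D1 D2].
  assert (Dsh : is_derive (fun s => T + s) t 1).
  { apply (D_eq _ _ (0 + 1)). ring. apply D_plus. apply D_const. apply D_id. }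
  split.
  - apply (D_eq _ _ (1 * (w * x2 (T + t)))). ring. apply (D_comp x1 (fun s => T + s)); auto.
  - apply (D_eq _ _ (1 * (- w * x1 (T + t) - w * sat ub ul (k1 * x1 (T + t) + k2 * x2 (T + t))))). ring.
    apply (D_comp x2 (fun s => T + s)); auto.
Qed.

Lemma gron (D dD : R -> R) c : 0 <= c -> (forall s, is_derive D s (dD s)) ->
  (forall s, Rabs (dD s) <= c * D s) -> forall s, D s <= exp (c * Rabs s) * D 0.
Proof.
  intros Hc Hd Hb s.
  assert (Dexp : forall a u, is_derive (fun u => exp (a * u)) u (a * exp (a * u))).
  { intros a u. apply (D_eq _ _ (a * exp (a * u))). ring.
    apply (D_eq _ _ ((a * 1 + 0 * u) * exp (a * u))). ring.
    apply (D_comp exp (fun u => a * u)). apply is_derive_exp.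
    apply (D_eq _ _ (0 * u + a * 1)). ring. apply D_mult. apply D_const. apply D_id. }
  destruct (Rle_dec 0 s).
  - rewrite Rabs_pos_eq by lra.
    assert (A := nonincr (fun u => exp (- c * u) * D u)
       (fun u => (- c * exp (- c * u)) * D u + exp (- c * u) * dD u) 0 s r).
    cbv beta in A. rewrite Rmult_0_r, exp_0, Rmult_1_l in A.
    assert (B : exp (- c * s) * D s <= D 0).
    { apply A. intros x _. apply (D_mult (fun u => exp (- c * u)) D x). apply Dexp. auto.
      intros x _. assert (E := exp_pos (- c * x)). specialize (Hb x).
      apply Rabs_le_between in Hb. nra. }
    assert (E : exp (c * s) * exp (- c * s) = 1) by (rewrite <- exp_plus; replace (c * s + - c * s) with 0 by ring; apply exp_0).
    assert (E2 := exp_pos (c * s)).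
    apply (Rmult_le_compat_l (exp (c * s))) in B. 2: lra. rewrite <- Rmult_assoc, E, Rmult_1_l in B. lra.
  - rewrite Rabs_left by lra.
    assert (B : exp (c * s) * D s <= D 0).
    { assert (A := nondecr (fun u => exp (c * u) * D u)
         (fun u => (c * exp (c * u)) * D u + exp (c * u) * dD u) s 0 ltac:(lra)).
      cbv beta in A. rewrite Rmult_0_r, exp_0, Rmult_1_l in A. apply A.
      intros x _. apply (D_mult (fun u => exp (c * u)) D x). apply Dexp. auto.
      intros x _. assert (E := exp_pos (c * x)). specialize (Hb x).
      apply Rabs_le_between in Hb. nra. }
    assert (E : exp (- (c * s)) * exp (c * s) = 1) by (rewrite <- exp_plus; replace (- (c * s) + c * s) with 0 by ring; apply exp_0).
    assert (E2 := exp_pos (- (c * s))).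
    replace (c * - s) with (- (c * s)) by ring.
    apply (Rmult_le_compat_l (exp (- (c * s)))) in B. 2: lra.
    rewrite <- Rmult_assoc, E, Rmult_1_l in B. lra.
Qed.

Lemma cluster1 (u : nat -> R) M : (forall n, Rabs (u n) <= M) ->
  exists p, forall eps, 0 < eps -> forall N, exists n, (N <= n)%nat /\ Rabs (u n - p) < eps.
Proof.
  intros HM. destruct (Bolzano_Weierstrass u (fun c => - M <= c <= M) (compact_P3 (- M) M)) as [p Hp].
  { intros n. apply Rabs_le_between. auto. }
  exists p. intros eps He N. destruct (Hp (disc p (mkposreal eps He)) N) as [n [Hn Hv]].
  - exists (mkposreal eps He). intros y Hy. exact Hy.
  - exists n. split; auto.
Qed.

Fixpoint iterc (ch : nat -> nat -> nat) (k : nat) : nat :=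
  match k with O => ch O O | S k' => ch k (S (iterc ch k')) end.

Lemma inv_small eps : 0 < eps -> exists K, / INR (S K) < eps.
Proof.
  intros He. destruct (INR_archimed eps 1 He) as [K HK]. exists K.
  rewrite S_INR. assert (0 <= INR K) by apply pos_INR.
  apply (Rmult_lt_reg_r (INR K + 1)). lra. rewrite Rinv_l by lra. nra.
Qed.

Lemma cluster2 (u v : nat -> R) M : (forall n, Rabs (u n) <= M /\ Rabs (v n) <= M) ->
  exists p q, forall eps, 0 < eps -> forall N, exists n, (N <= n)%nat /\
    Rabs (u n - p) < eps /\ Rabs (v n - q) < eps.
Proof.
  intros HM. destruct (cluster1 u M) as [p Hp]. intros n; apply HM.
  assert (Hc : forall k N, exists n, (N <= n)%nat /\ Rabs (u n - p) < / INR (S k)).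
  { intros k N. apply Hp. apply Rinv_0_lt_compat. apply lt_0_INR. lia. }
  set (ch := fun k N => proj1_sig (constructive_indefinite_description _ (Hc k N))).
  assert (Hch : forall k N, (N <= ch k N)%nat /\ Rabs (u (ch k N) - p) < / INR (S k)).
  { intros k N. unfold ch. destruct (constructive_indefinite_description _ (Hc k N)) as [n Hn]. exact Hn. }
  set (phi := iterc ch).
  assert (Hphi : forall k, (k <= phi k)%nat /\ Rabs (u (phi k) - p) < / INR (S k)).
  { induction k as [|k IH].
    - split. lia. apply Hch.
    - unfold phi; simpl. fold phi. destruct (Hch (S k) (S (phi k))) as [A B]. split; auto. lia. }
  destruct (cluster1 (fun k => v (phi k)) M) as [q Hq]. intros n; apply HM.
  exists p, q. intros eps He N. destruct (inv_small eps He) as [K HK].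
  destruct (Hq eps He (N + K)%nat) as [k [Hk Hv]].
  exists (phi k). destruct (Hphi k) as [A B]. split. lia. split; auto.
  eapply Rlt_trans. apply B. eapply Rle_lt_trans. 2: apply HK.
  apply Rinv_le_contravar. apply lt_0_INR; lia. apply le_INR; lia.
Qed.

Lemma contdep w k1 k2 ub ul y1 y2 z1 z2 : 0 < ub -> 0 < ul ->
  is_solution w k1 k2 ub ul y1 y2 -> is_solution w k1 k2 ub ul z1 z2 -> forall s,
  (y1 s - z1 s) * (y1 s - z1 s) + (y2 s - z2 s) * (y2 s - z2 s) <=
  exp (4 * (Rabs w * (2 + Rabs k1 + Rabs k2)) * Rabs s) *
  ((y1 0 - z1 0) * (y1 0 - z1 0) + (y2 0 - z2 0) * (y2 0 - z2 0)).
Proof.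
  intros Hu Hl Hy Hz. set (L := Rabs w * (2 + Rabs k1 + Rabs k2)).
  assert (0 <= Rabs w) by apply Rabs_pos. assert (0 <= Rabs k1) by apply Rabs_pos.
  assert (0 <= Rabs k2) by apply Rabs_pos.
  assert (HL : 0 <= L) by (unfold L; nra).
  apply (gron (fun s => (y1 s - z1 s) * (y1 s - z1 s) + (y2 s - z2 s) * (y2 s - z2 s))
     (fun s => 2 * (y1 s - z1 s) * (w * y2 s - w * z2 s) +
               2 * (y2 s - z2 s) * (F2 w k1 k2 ub ul (y1 s) (y2 s) - F2 w k1 k2 ub ul (z1 s) (z2 s)))).
  - unfold L; nra.
  - intros s. destruct (Hy s) as [Dy1 Dy2]. destruct (Hz s) as [Dz1 Dz2].
    assert (E1 := D_minus _ _ s _ _ Dy1 Dz1). assert (E2 := D_minus _ _ s _ _ Dy2 Dz2).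
    apply (D_eq _ _ (((w * y2 s - w * z2 s) * (y1 s - z1 s) + (y1 s - z1 s) * (w * y2 s - w * z2 s)) +
                      ((F2 w k1 k2 ub ul (y1 s) (y2 s) - F2 w k1 k2 ub ul (z1 s) (z2 s)) * (y2 s - z2 s)
                       + (y2 s - z2 s) * (F2 w k1 k2 ub ul (y1 s) (y2 s) - F2 w k1 k2 ub ul (z1 s) (z2 s))))).
    ring.
    apply D_plus; [apply (D_mult (fun t => y1 t - z1 t) (fun t => y1 t - z1 t)) |
                   apply (D_mult (fun t => y2 t - z2 t) (fun t => y2 t - z2 t))]; exact E1 || exact E2.
  - intros s. set (d1 := y1 s - z1 s). set (d2 := y2 s - z2 s).
    assert (F := F2_lip w k1 k2 ub ul Hu Hl (y1 s) (y2 s) (z1 s) (z2 s)). fold L d1 d2 in F.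
    assert (W1 : Rabs (w * y2 s - w * z2 s) <= L * Rabs d2).
    { rewrite <- Rmult_minus_distr_l, Rabs_mult. fold d2. unfold L.
      assert (0 <= Rabs d2) by apply Rabs_pos.
      assert (0 <= Rabs w * Rabs d2 * (1 + Rabs k1 + Rabs k2)) by (apply Rmult_le_pos; [apply Rmult_le_pos|]; lra).
      replace (Rabs w * (2 + Rabs k1 + Rabs k2) * Rabs d2) with
        (Rabs w * Rabs d2 + Rabs w * Rabs d2 * (1 + Rabs k1 + Rabs k2)) by ring. lra. }
    set (e := F2 w k1 k2 ub ul (y1 s) (y2 s) - F2 w k1 k2 ub ul (z1 s) (z2 s)) in *.
    set (g := w * y2 s - w * z2 s) in *.
    assert (T : Rabs (2 * d1 * g + 2 * d2 * e) <= 2 * Rabs d1 * Rabs g + 2 * Rabs d2 * Rabs e).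
    { eapply Rle_trans. apply Rabs_triang. rewrite !Rabs_mult, Rabs_pos_eq by lra. lra. }
    assert (A1 : 0 <= Rabs d1) by apply Rabs_pos. assert (A2 : 0 <= Rabs d2) by apply Rabs_pos.
    assert (Q1 : Rabs d1 * Rabs d1 = d1 * d1) by (rewrite <- Rabs_mult; apply Rabs_pos_eq; nra).
    assert (Q2 : Rabs d2 * Rabs d2 = d2 * d2) by (rewrite <- Rabs_mult; apply Rabs_pos_eq; nra).
    assert (Rabs d1 * Rabs g <= Rabs d1 * (L * Rabs d2)) by (apply Rmult_le_compat_l; auto).
    assert (Rabs d2 * Rabs e <= Rabs d2 * (L * (Rabs d1 + Rabs d2))) by (apply Rmult_le_compat_l; auto).
    assert (0 <= L * ((Rabs d1 - Rabs d2) * (Rabs d1 - Rabs d2))).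
    { apply Rmult_le_pos; auto. pose proof (Rle_0_sqr (Rabs d1 - Rabs d2)) as Hs; unfold Rsqr in Hs; lra. }
    assert (0 <= L * (Rabs d1 * Rabs d1)) by (apply Rmult_le_pos; auto; apply Rmult_le_pos; auto).
    rewrite <- Q1, <- Q2. nra.
Qed.

Lemma V_cont k1 ub ul a0 b0 : 0 < ub -> 0 < ul -> forall eps, 0 < eps -> exists eta, 0 < eta /\
  forall a b, Rabs (a - a0) < eta -> Rabs (b - b0) < eta ->
  Rabs (V k1 ub ul a b - V k1 ub ul a0 b0) < eps.
Proof.
  intros Hu Hl eps He.
  assert (CG := der_cont _ _ _ (G_der k1 ub ul a0 Hu Hl)).
  assert (CB : continuity_pt (fun b => b * b / 2) b0).
  { apply (der_cont _ _ (/ 2 * (1 * b0 + b0 * 1))).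
    apply (D_ext (fun b => / 2 * (b * b))). intros; field. apply D_scal. apply D_mult; apply D_id. }
  destruct (cont_eps _ _ CG (eps / 2) ltac:(lra)) as [d1 [Hd1 H1]].
  destruct (cont_eps _ _ CB (eps / 2) ltac:(lra)) as [d2 [Hd2 H2]].
  exists (Rmin d1 d2). split. apply Rmin_pos; auto. intros a b Ha Hb.
  specialize (H1 a (Rlt_le_trans _ _ _ Ha (Rmin_l _ _))).
  specialize (H2 b (Rlt_le_trans _ _ _ Hb (Rmin_r _ _))).
  unfold V. replace (b * b / 2 + G k1 ub ul a - (b0 * b0 / 2 + G k1 ub ul a0))
    with ((b * b / 2 - b0 * b0 / 2) + (G k1 ub ul a - G k1 ub ul a0)) by ring.
  eapply Rle_lt_trans. apply Rabs_triang. lra.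
Qed.


Lemma sq_nonneg x : 0 <= x * x.
Proof. apply Rle_0_sqr. Qed.
Lemma Rabs_sq x : Rabs x * Rabs x = x * x.
Proof. rewrite <- Rabs_mult. apply Rabs_pos_eq. apply sq_nonneg. Qed.

Lemma cpos k1 : -1 < k1 -> 0 < Rmin 1 (1 + k1).
Proof. intros. unfold Rmin; destruct Rle_dec; lra. Qed.

Lemma W_nonneg k1 ub ul a b : 0 < ub -> 0 < ul -> -1 < k1 -> 0 <= V k1 ub ul a b.
Proof.
  intros Hu Hl Hk. assert (A := V_lower k1 ub ul a b Hu Hl Hk). assert (B := cpos k1 Hk).
  assert (0 <= a * a + b * b) by nra. assert (0 <= Rmin 1 (1 + k1) / 2 * (a * a + b * b)).
  { apply Rmult_le_pos; lra. } lra.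
Qed.

Lemma Vinf_ex w k1 k2 ub ul x1 x2 : 0 < w -> 0 < ub -> 0 < ul -> -1 < k1 -> 0 < k2 ->
  is_solution w k1 k2 ub ul x1 x2 ->
  exists Vi, 0 <= Vi /\ (forall t, 0 <= t -> Vi <= V k1 ub ul (x1 t) (x2 t)) /\
   (forall eps, 0 < eps -> exists T, forall t, T <= t -> V k1 ub ul (x1 t) (x2 t) < Vi + eps).
Proof.
  intros Hw Hu Hl Hk1 Hk2 Hs. set (W := fun t => V k1 ub ul (x1 t) (x2 t)).
  assert (Wpos : forall t, 0 <= W t) by (intros; apply W_nonneg; auto).
  assert (Wm : forall t1 t2, t1 <= t2 -> W t2 <= W t1).
  { intros. apply (V_mono w k1 k2 ub ul x1 x2); auto. lra. }
  destruct (growing_cv (fun n => - W (INR n))) as [l Hl'].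
  - intros n. cbv beta. assert (W (INR (S n)) <= W (INR n)) by (apply Wm; rewrite S_INR; lra). lra.
  - exists 0. intros x [i ->]. specialize (Wpos (INR i)). lra.
  assert (Hub : forall n, - W (INR n) <= l).
  { apply growing_ineq; auto. intros n. cbv beta. assert (W (INR (S n)) <= W (INR n)) by (apply Wm; rewrite S_INR; lra). lra. }
  exists (- l). split; [|split].
  - destruct (Rle_dec l 0); [lra|]. destruct (Hl' l ltac:(lra)) as [N HN].
    specialize (HN N (le_n _)). unfold R_dist in HN. specialize (Wpos (INR N)).
    apply Rabs_def2 in HN. lra.
  - intros t Ht. destruct (INR_archimed 1 t) as [n Hn]. lra.
    specialize (Hub n). assert (W (INR n) <= W t) by (apply Wm; lra). unfold W in *. lra.
  - intros eps He. destruct (Hl' eps He) as [N HN]. exists (INR N). intros t Ht.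
    specialize (HN N (le_n _)). unfold R_dist in HN. apply Rabs_def2 in HN.
    assert (W t <= W (INR N)) by (apply Wm; lra). unfold W in *. lra.
Qed.

Lemma sq_abs x B : x * x <= B -> Rabs x <= B + 1.
Proof.
  intros H. destruct (Rle_dec (Rabs x) (B + 1)); auto.
  assert (Q : Rabs x * Rabs x = x * x) by apply Rabs_sq.
  assert (0 <= x * x) by nra. nra.
Qed.

Lemma conv_of_V k1 ub ul x1 x2 : 0 < ub -> 0 < ul -> -1 < k1 ->
  (forall eps, 0 < eps -> exists T, forall t, T <= t -> V k1 ub ul (x1 t) (x2 t) < eps) ->
  is_lim x1 p_infty 0 /\ is_lim x2 p_infty 0.
Proof.
  intros Hu Hl Hk H. set (c := Rmin 1 (1 + k1)). assert (Hc : 0 < c) by apply cpos, Hk.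
  assert (Gen : forall eps, 0 < eps -> exists T, forall t, T < t ->
            x1 t * x1 t + x2 t * x2 t < eps * eps).
  { intros eps He. destruct (H (c / 2 * (eps * eps))) as [T HT].
    { apply Rmult_lt_0_compat. lra. nra. }
    exists T. intros t Ht. specialize (HT t ltac:(lra)).
    assert (A := V_lower k1 ub ul (x1 t) (x2 t) Hu Hl Hk). fold c in A.
    apply (Rmult_lt_reg_l (c / 2)). lra. lra. }
  split; apply lim_of_eps; intros eps He; destruct (Gen eps He) as [T HT]; exists T; intros t Ht;
    specialize (HT t Ht).
  - destruct (Rlt_dec (Rabs (x1 t)) eps) as [R|R]; auto; exfalso; apply Rnot_lt_le in R.
    assert (Q : Rabs (x1 t) * Rabs (x1 t) = x1 t * x1 t) by apply Rabs_sq.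
    assert (eps * eps <= Rabs (x1 t) * Rabs (x1 t)) by nra. nra.
  - destruct (Rlt_dec (Rabs (x2 t)) eps) as [R|R]; auto; exfalso; apply Rnot_lt_le in R.
    assert (Q : Rabs (x2 t) * Rabs (x2 t) = x2 t * x2 t) by apply Rabs_sq.
    assert (eps * eps <= Rabs (x2 t) * Rabs (x2 t)) by nra. nra.
Qed.

Lemma invar w k1 k2 ub ul x1 x2 z1 z2 Vi p q : 0 < ub -> 0 < ul ->
  is_solution w k1 k2 ub ul x1 x2 -> is_solution w k1 k2 ub ul z1 z2 -> z1 0 = p -> z2 0 = q ->
  (forall t, 0 <= t -> Vi <= V k1 ub ul (x1 t) (x2 t)) ->
  (forall eps, 0 < eps -> exists T, forall t, T <= t -> V k1 ub ul (x1 t) (x2 t) < Vi + eps) ->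
  (forall eps, 0 < eps -> forall N, exists n, (N <= n)%nat /\
     Rabs (x1 (INR n) - p) < eps /\ Rabs (x2 (INR n) - q) < eps) ->
  forall s, V k1 ub ul (z1 s) (z2 s) = Vi.
Proof.
  intros Hu Hl Hx Hz Hp Hq Hlb Hev Hcl s. apply eq_eps. intros eps He.
  destruct (V_cont k1 ub ul (z1 s) (z2 s) Hu Hl (eps / 2) ltac:(lra)) as [eta [Heta Hc]].
  destruct (Hev (eps / 2) ltac:(lra)) as [T HT].
  set (K := exp (4 * (Rabs w * (2 + Rabs k1 + Rabs k2)) * Rabs s)).
  assert (HK : 0 < K) by apply exp_pos.
  set (r := Rmin 1 (eta * eta / (4 * K))).
  assert (Hr : 0 < r). { unfold r, Rmin. destruct Rle_dec. lra. apply Rdiv_lt_0_compat; nra. }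
  assert (Hr1 : r <= 1) by apply Rmin_l.
  assert (Hr2 : r <= eta * eta / (4 * K)) by apply Rmin_r.
  destruct (INR_archimed 1 (Rabs T + Rabs s)) as [N0 HN0]. lra.
  destruct (Hcl r Hr N0) as [n [Hn [A1 A2]]].
  assert (Hnle : INR N0 <= INR n) by (apply le_INR; auto).
  assert (HT0 : 0 <= Rabs T) by apply Rabs_pos. assert (Hs0 : 0 <= Rabs s) by apply Rabs_pos.
  assert (Hns : T <= INR n + s /\ 0 <= INR n + s).
  { assert (T <= Rabs T) by apply RRle_abs. assert (- s <= Rabs s) by (rewrite <- Rabs_Ropp; apply RRle_abs).
    split; lra. }
  assert (Hy := shift_sol w k1 k2 ub ul x1 x2 (INR n) Hx).
  assert (CD := contdep w k1 k2 ub ul _ _ z1 z2 Hu Hl Hy Hz s). fold K in CD.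
  cbv beta in CD. rewrite !Rplus_0_r, Hp, Hq in CD.
  assert (B1 : (x1 (INR n) - p) * (x1 (INR n) - p) < r * r).
  { assert (Q : Rabs (x1 (INR n) - p) * Rabs (x1 (INR n) - p) = (x1 (INR n) - p) * (x1 (INR n) - p))
      by apply Rabs_sq.
    assert (0 <= Rabs (x1 (INR n) - p)) by apply Rabs_pos. nra. }
  assert (B2 : (x2 (INR n) - q) * (x2 (INR n) - q) < r * r).
  { assert (Q : Rabs (x2 (INR n) - q) * Rabs (x2 (INR n) - q) = (x2 (INR n) - q) * (x2 (INR n) - q))
      by apply Rabs_sq.
    assert (0 <= Rabs (x2 (INR n) - q)) by apply Rabs_pos. nra. }
  assert (Hrr : r * r <= eta * eta / (4 * K)) by nra.
  assert (Hsum : K * ((x1 (INR n) - p) * (x1 (INR n) - p) + (x2 (INR n) - q) * (x2 (INR n) - q)) < eta * eta).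
  { apply Rle_lt_trans with (K * (2 * (eta * eta / (4 * K)))).
    apply Rmult_le_compat_l; lra.
    replace (K * (2 * (eta * eta / (4 * K)))) with (eta * eta / 2) by (field; lra). nra. }
  set (d1 := x1 (INR n + s) - z1 s) in CD. set (d2 := x2 (INR n + s) - z2 s) in CD.
  assert (E1 : Rabs d1 < eta).
  { destruct (Rlt_dec (Rabs d1) eta) as [R|R]; auto. apply Rnot_lt_le in R.
    assert (Q : Rabs d1 * Rabs d1 = d1 * d1) by apply Rabs_sq. nra. }
  assert (E2 : Rabs d2 < eta).
  { destruct (Rlt_dec (Rabs d2) eta) as [R|R]; auto. apply Rnot_lt_le in R.
    assert (Q : Rabs d2 * Rabs d2 = d2 * d2) by apply Rabs_sq. nra. }
  specialize (Hc _ _ E1 E2).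
  specialize (HT (INR n + s) (proj1 Hns)). specialize (Hlb (INR n + s) (proj2 Hns)).
  apply Rabs_def2 in Hc. apply Rabs_def1; lra.
Qed.

Lemma der_uniq (f : R -> R) x l1 l2 : is_derive f x l1 -> is_derive f x l2 -> l1 = l2.
Proof.
  intros A B. apply is_derive_unique in A. apply is_derive_unique in B. congruence.
Qed.

Lemma no_invar w k1 k2 ub ul z1 z2 Vi : 0 < w -> 0 < ub -> 0 < ul -> -1 < k1 -> 0 < k2 -> 0 < Vi ->
  is_solution w k1 k2 ub ul z1 z2 -> (forall s, V k1 ub ul (z1 s) (z2 s) = Vi) -> False.
Proof.
  intros Hw Hu Hl Hk1 Hk2 HVi Hz HV.
  set (c := Rmin 1 (1 + k1)). assert (Hc : 0 < c) by apply cpos, Hk1.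
  assert (Hg : forall s, sat ub ul (k1 * z1 s + k2 * z2 s) = sat ub ul (k1 * z1 s)).
  { intros s. assert (D1 := V_der w k1 k2 ub ul z1 z2 s Hu Hl Hz).
    assert (D2 : is_derive (fun s => V k1 ub ul (z1 s) (z2 s)) s 0).
    { apply (D_ext (fun _ => Vi)). intros; symmetry; auto. apply D_const. }
    assert (E := der_uniq _ _ _ _ D1 D2).
    destruct (Req_dec (z2 s) 0) as [Z|Z].
    - rewrite Z. f_equal. ring.
    - assert (X : sat ub ul (k1 * z1 s + k2 * z2 s) - sat ub ul (k1 * z1 s) = 0).
      { apply (Rmult_eq_reg_l (- w * z2 s)). rewrite E. ring. intros Hc'.
        apply Z. apply (Rmult_eq_reg_l (- w)). rewrite Rmult_0_r. exact Hc'. lra. }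
      lra. }
  assert (Hd2 : forall s, is_derive z2 s (- w * (z1 s + sat ub ul (k1 * z1 s)))).
  { intros s. destruct (Hz s) as [_ D]. rewrite Hg in D.
    apply (D_eq _ _ (- w * z1 s - w * sat ub ul (k1 * z1 s))). ring. exact D. }
  assert (Hcz1 : forall s, continuity_pt z1 s) by (intros s; apply (der_cont _ _ _ (proj1 (Hz s)))).
  assert (Hcz2 : forall s, continuity_pt z2 s) by (intros s; apply (der_cont _ _ _ (Hd2 s))).
  set (m := Rmin ub ul). assert (Hm : 0 < m) by (unfold m, Rmin; destruct Rle_dec; lra).
  assert (Hmu : m <= ub) by apply Rmin_l. assert (Hml : m <= ul) by apply Rmin_r.
  assert (Hk1a : 0 <= Rabs k1) by apply Rabs_pos.
  assert (Hkey : forall y, y + sat ub ul (k1 * y) = 0 -> y = 0).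
  { intros y Hy. destruct (Rle_dec 0 y).
    - assert (A := key_pos k1 ub ul y Hu Hl Hk1 r). fold c in A. nra.
    - assert (A := key_neg k1 ub ul y Hu Hl Hk1 ltac:(lra)). fold c in A. nra. }
  assert (HA : forall s, m <= Rabs (k1 * z1 s)).
  { intros s1. destruct (Rle_dec m (Rabs (k1 * z1 s1))) as [R|R]; auto. exfalso.
    apply Rnot_le_lt in R.
    set (e' := (m - Rabs (k1 * z1 s1)) / (Rabs k1 + 1)).
    assert (He' : 0 < e') by (apply Rdiv_lt_0_compat; lra).
    destruct (cont_eps z1 s1 (Hcz1 s1) e' He') as [d [Hd Hyd]].
    assert (Loc : forall y, Rabs (y - s1) < d -> 0 = z2 y).
    { intros y Hy. specialize (Hyd y Hy).
      assert (Hb : Rabs (k1 * z1 y) < m).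
      { replace (k1 * z1 y) with (k1 * z1 s1 + k1 * (z1 y - z1 s1)) by ring.
        eapply Rle_lt_trans. apply Rabs_triang. rewrite (Rabs_mult k1 (z1 y - z1 s1)).
        assert (Rabs k1 * Rabs (z1 y - z1 s1) <= Rabs k1 * e') by (apply Rmult_le_compat_l; lra).
        assert (Rabs k1 * e' < m - Rabs (k1 * z1 s1)).
        { unfold e'. apply (Rmult_lt_reg_r (Rabs k1 + 1)). lra.
          replace (Rabs k1 * ((m - Rabs (k1 * z1 s1)) / (Rabs k1 + 1)) * (Rabs k1 + 1))
            with (Rabs k1 * (m - Rabs (k1 * z1 s1))) by (field; lra). nra. }
        lra. }
      apply Rabs_def2 in Hb.
      assert (E := sat_strict ub ul (k1 * z1 y) (k1 * z1 y + k2 * z2 y) Hu Hl ltac:(lra) (Hg y)).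
      assert (k2 * z2 y = 0) by lra.
      symmetry. apply (Rmult_eq_reg_l k2). rewrite Rmult_0_r; auto. lra. }
    assert (Dz : is_derive z2 s1 0).
    { apply (is_derive_ext_loc (fun _ => 0) z2). exists (mkposreal d Hd). intros y Hy. apply Loc. exact Hy.
      apply D_const. }
    assert (E := der_uniq _ _ _ _ (Hd2 s1) Dz).
    assert (Z1 : z1 s1 = 0).
    { apply Hkey. apply (Rmult_eq_reg_l (- w)). rewrite Rmult_0_r; auto. lra. }
    assert (Z2 : z2 s1 = 0) by (symmetry; apply Loc; unfold Rminus; rewrite Rplus_opp_r, Rabs_R0; auto).
    specialize (HV s1). rewrite Z1, Z2 in HV. unfold V in HV. rewrite G_0 in HV. lra. }
  assert (Hnz : forall s, z1 s <> 0).
  { intros s E. specialize (HA s). rewrite E, Rmult_0_r, Rabs_R0 in HA. lra. }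
  assert (Hcont : continuity z1) by (intros s; auto).
  assert (Hbd : forall s, z2 s * z2 s <= 2 * Vi).
  { intros s. specialize (HV s). unfold V in HV. assert (A := G_lower k1 ub ul (z1 s) Hu Hl Hk1).
    assert (0 <= z1 s * z1 s) by apply sq_nonneg. assert (0 <= c * (z1 s * z1 s)) by (apply Rmult_le_pos; lra).
    fold c in A. lra. }
  set (d0 := w * (c * m / (Rabs k1 + 1))).
  assert (Hd0 : 0 < d0).
  { unfold d0. apply Rmult_lt_0_compat; auto. apply Rdiv_lt_0_compat; [apply Rmult_lt_0_compat|]; lra. }
  assert (Hlow : forall y, 0 < y -> m <= Rabs (k1 * y) -> c * m / (Rabs k1 + 1) <= y + sat ub ul (k1 * y)).
  { intros y Hy Hmy. assert (A := key_pos k1 ub ul y Hu Hl Hk1 ltac:(lra)). fold c in A.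
    rewrite Rabs_mult, (Rabs_pos_eq y) in Hmy by lra.
    assert (m <= (Rabs k1 + 1) * y) by nra.
    assert (c * m <= c * ((Rabs k1 + 1) * y)) by (apply Rmult_le_compat_l; lra).
    apply (Rmult_le_reg_r (Rabs k1 + 1)). lra.
    replace (c * m / (Rabs k1 + 1) * (Rabs k1 + 1)) with (c * m) by (field; lra). nra. }
  assert (Hhigh : forall y, y < 0 -> m <= Rabs (k1 * y) -> y + sat ub ul (k1 * y) <= - (c * m / (Rabs k1 + 1))).
  { intros y Hy Hmy. assert (A := key_neg k1 ub ul y Hu Hl Hk1 ltac:(lra)). fold c in A.
    rewrite Rabs_mult, (Rabs_left y) in Hmy by lra.
    assert (m <= (Rabs k1 + 1) * (- y)) by nra.
    assert (c * m <= c * ((Rabs k1 + 1) * (- y))) by (apply Rmult_le_compat_l; lra).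
    cut (c * m / (Rabs k1 + 1) <= - (y + sat ub ul (k1 * y))). lra.
    apply (Rmult_le_reg_r (Rabs k1 + 1)). lra.
    replace (c * m / (Rabs k1 + 1) * (Rabs k1 + 1)) with (c * m) by (field; lra). nra. }
  set (S := (Rabs (z2 0) + 2 * Vi + 2) / d0).
  assert (HS : 0 <= S) by (unfold S; apply Rdiv_le_0_compat; [assert (0 <= Rabs (z2 0)) by apply Rabs_pos|]; lra).
  assert (HSd : d0 * S = Rabs (z2 0) + 2 * Vi + 2) by (unfold S; field; lra).
  assert (Ha0 := RRle_abs (z2 0)). assert (Hb0 : - z2 0 <= Rabs (z2 0)) by (rewrite <- Rabs_Ropp; apply RRle_abs).
  destruct (Rlt_dec 0 (z1 0)) as [P|P].
  - assert (Pos : forall s, 0 <= s -> 0 < z1 s).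
    { intros s Hs. destruct (Rlt_dec 0 (z1 s)) as [Q|Q]; auto. exfalso.
      assert (Q' : z1 s < 0) by (assert (z1 s <> 0) by auto; lra).
      destruct (Req_dec s 0) as [->|Hs0]. lra.
      destruct (IVT (fun u => - z1 u) 0 s) as [u [Hu' Hzu]].
      intros x. apply continuity_pt_opp. auto. lra. lra. lra.
      apply (Hnz u). lra. }
    assert (Dec : z2 S + d0 * S <= z2 0 + d0 * 0).
    { apply (nonincr (fun u => z2 u + d0 * u) (fun u => - w * (z1 u + sat ub ul (k1 * z1 u)) + d0)); auto.
      intros x _. apply D_plus. auto. apply (D_eq _ _ (d0 * 1)). ring. apply D_scal. apply D_id.
      intros x Hx. assert (A := Hlow (z1 x) (Pos x ltac:(lra)) (HA x)). unfold d0.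
      assert (w * (c * m / (Rabs k1 + 1)) <= w * (z1 x + sat ub ul (k1 * z1 x))) by (apply Rmult_le_compat_l; lra).
      lra. }
    specialize (Hbd S). nra.
  - assert (N0 : z1 0 < 0) by (assert (z1 0 <> 0) by auto; lra).
    assert (Neg : forall s, 0 <= s -> z1 s < 0).
    { intros s Hs. destruct (Rlt_dec (z1 s) 0) as [Q|Q]; auto. exfalso.
      assert (Q' : 0 < z1 s) by (assert (z1 s <> 0) by auto; lra).
      destruct (Req_dec s 0) as [->|Hs0]. lra.
      destruct (IVT z1 0 s) as [u [Hu' Hzu]]; auto. lra.
      apply (Hnz u). lra. }
    assert (Inc : z2 0 - d0 * 0 <= z2 S - d0 * S).
    { apply (nondecr (fun u => z2 u - d0 * u) (fun u => - w * (z1 u + sat ub ul (k1 * z1 u)) - d0)); auto.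
      intros x _. apply D_minus. auto. apply (D_eq _ _ (d0 * 1)). ring. apply D_scal. apply D_id.
      intros x Hx. assert (A := Hhigh (z1 x) (Neg x ltac:(lra)) (HA x)). unfold d0.
      assert (w * (z1 x + sat ub ul (k1 * z1 x)) <= w * (- (c * m / (Rabs k1 + 1)))) by (apply Rmult_le_compat_l; lra).
      lra. }
    specialize (Hbd S). nra.
Qed.

Lemma attract w k1 k2 ub ul x1 x2 : 0 < w -> 0 < ub -> 0 < ul -> -1 < k1 -> 0 < k2 ->
  is_solution w k1 k2 ub ul x1 x2 -> is_lim x1 p_infty 0 /\ is_lim x2 p_infty 0.
Proof.
  intros Hw Hu Hl Hk1 Hk2 Hx.
  destruct (Vinf_ex w k1 k2 ub ul x1 x2 Hw Hu Hl Hk1 Hk2 Hx) as [Vi [HVi0 [Hlb Hev]]].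
  destruct (Req_dec Vi 0) as [E|NE].
  - apply (conv_of_V k1 ub ul); auto. intros eps He. destruct (Hev eps He) as [T HT].
    exists T. intros t Ht. specialize (HT t Ht). lra.
  - exfalso. set (c := Rmin 1 (1 + k1)). assert (Hc : 0 < c) by apply cpos, Hk1.
    set (W0 := V k1 ub ul (x1 0) (x2 0)).
    set (B := W0 * 2 / c).
    assert (Hbd : forall n : nat, Rabs (x1 (INR n)) <= B + 1 /\ Rabs (x2 (INR n)) <= B + 1).
    { intros n. assert (A := V_lower k1 ub ul (x1 (INR n)) (x2 (INR n)) Hu Hl Hk1). fold c in A.
      assert (M := V_mono w k1 k2 ub ul x1 x2 Hu Hl Hw ltac:(lra) Hx 0 (INR n) (pos_INR n)). fold W0 in M.
      assert (Q : x1 (INR n) * x1 (INR n) + x2 (INR n) * x2 (INR n) <= B).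
      { unfold B. apply (Rmult_le_reg_l (c / 2)). lra.
        replace (c / 2 * (W0 * 2 / c)) with W0 by (field; lra). lra. }
      assert (0 <= x1 (INR n) * x1 (INR n)) by apply sq_nonneg.
      assert (0 <= x2 (INR n) * x2 (INR n)) by apply sq_nonneg.
      split; apply sq_abs; lra. }
    destruct (cluster2 (fun n => x1 (INR n)) (fun n => x2 (INR n)) (B + 1) Hbd) as [p [q Hpq]].
    destruct (sys_exists w k1 k2 ub ul p q Hu Hl) as [z1 [z2 [Hz1 [Hz2 Hz]]]].
    assert (HI := invar w k1 k2 ub ul x1 x2 z1 z2 Vi p q Hu Hl Hx Hz Hz1 Hz2 Hlb Hev Hpq).
    apply (no_invar w k1 k2 ub ul z1 z2 Vi); auto. lra.
Qed.

Lemma stab w k1 k2 ub ul : 0 < w -> 0 < ub -> 0 < ul -> -1 < k1 -> 0 < k2 ->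
  forall eps : R, 0 < eps -> exists delta : R, 0 < delta /\
     forall x1 x2 : R -> R, is_solution w k1 k2 ub ul x1 x2 ->
       norm2 (x1 0) (x2 0) < delta ->
       forall t : R, 0 <= t -> norm2 (x1 t) (x2 t) < eps.
Proof.
  intros Hw Hu Hl Hk1 Hk2 eps He.
  set (c := Rmin 1 (1 + k1)). assert (Hc : 0 < c) by apply cpos, Hk1.
  assert (Hc1 : c <= 1) by apply Rmin_l.
  set (A := (1 + Rabs k1) / 2). set (B := c / 2).
  assert (HA : 0 < A) by (unfold A; assert (0 <= Rabs k1) by apply Rabs_pos; lra).
  assert (HB : 0 < B) by (unfold B; lra).
  assert (HBA : B <= A) by (unfold A, B; assert (0 <= Rabs k1) by apply Rabs_pos; lra).
  exists (eps * B / A). split. apply Rdiv_lt_0_compat; [apply Rmult_lt_0_compat|]; lra.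
  intros x1 x2 Hx H0 t Ht. apply norm2_lt; auto.
  apply norm2_lt_inv in H0.
  assert (L := V_lower k1 ub ul (x1 t) (x2 t) Hu Hl Hk1). fold c in L.
  assert (U := V_upper k1 ub ul (x1 0) (x2 0) Hu Hl).
  assert (M := V_mono w k1 k2 ub ul x1 x2 Hu Hl Hw ltac:(lra) Hx 0 t Ht).
  set (X := x1 t * x1 t + x2 t * x2 t) in *. set (Y := x1 0 * x1 0 + x2 0 * x2 0) in *.
  assert (HBX : B * X <= A * Y) by (unfold B, A; lra).
  assert (HY : A * Y < A * (eps * B / A * (eps * B / A))) by (apply Rmult_lt_compat_l; auto).
  replace (A * (eps * B / A * (eps * B / A))) with (B * (eps * eps * (B / A))) in HY by (field; lra).
  assert (HX : X < eps * eps * (B / A)).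
  { apply (Rmult_lt_reg_l B); auto. lra. }
  assert (B / A <= 1) by (apply (Rmult_le_reg_r A); auto; field_simplify; lra).
  assert (0 < eps * eps) by nra. nra.
Qed.


Theorem proposition3 (w k1 k2 ubar ulow : R) (hw : 0 < w)
  (hub : 0 < ubar) (hul : 0 < ulow) :
  GAS w k1 k2 ubar ulow <-> (k1 > -1 /\ k2 > 0).
Proof.
  split.
  - intros [Hst Hat]. destruct (Rle_dec k2 0) as [K2|K2].
    + exfalso. destruct (sys_exists w k1 k2 ubar ulow 0 1 hub hul) as [x1 [x2 [H1 [H2 Hx]]]].
      destruct (Hat x1 x2 Hx) as [L1 L2].
      assert (Hk : 0 <= Rabs k1) by apply Rabs_pos.
      set (eta := / (2 * (1 + Rabs k1))).
      assert (Heta : 0 < eta) by (unfold eta; apply Rinv_0_lt_compat; lra).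
      destruct (eps_of_lim x1 L1 eta Heta) as [T1 HT1].
      destruct (eps_of_lim x2 L2 eta Heta) as [T2 HT2].
      set (t := Rabs T1 + Rabs T2 + 1).
      assert (A1 := RRle_abs T1). assert (A2 := RRle_abs T2).
      assert (P1 := Rabs_pos T1). assert (P2 := Rabs_pos T2).
      specialize (HT1 t ltac:(unfold t; lra)). specialize (HT2 t ltac:(unfold t; lra)).
      assert (M := V_incr w k1 k2 ubar ulow x1 x2 hub hul hw K2 Hx 0 t ltac:(unfold t; lra)).
      rewrite H1, H2 in M. unfold V at 1 in M. rewrite G_0 in M.
      assert (U := V_upper k1 ubar ulow (x1 t) (x2 t) hub hul).
      assert (Q1 : x1 t * x1 t < eta * eta).
      { rewrite <- Rabs_sq. assert (0 <= Rabs (x1 t)) by apply Rabs_pos. nra. }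
      assert (Q2 : x2 t * x2 t < eta * eta).
      { rewrite <- Rabs_sq. assert (0 <= Rabs (x2 t)) by apply Rabs_pos. nra. }
      assert (E : (1 + Rabs k1) * (eta * eta) = eta / 2) by (unfold eta; field; lra).
      assert (Eb : eta <= 1 / 2) by (unfold eta; apply (Rmult_le_reg_r (2 * (1 + Rabs k1))); [lra|];
        rewrite Rinv_l by lra; nra).
      assert ((1 + Rabs k1) / 2 * (x1 t * x1 t + x2 t * x2 t) <= (1 + Rabs k1) / 2 * (2 * (eta * eta))).
      { apply Rmult_le_compat_l; lra. }
      nra.
    + destruct (Rle_dec k1 (-1)) as [K1|K1].
      * exfalso.
        assert (Hs : is_solution w k1 k2 ubar ulow (fun _ => ulow) (fun _ => 0)).
        { intros t. split.
          - apply (D_eq _ _ 0). ring. apply D_const.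
          - apply (D_eq _ _ 0). 2: apply D_const.
            assert (S : sat ubar ulow (k1 * ulow + k2 * 0) = - ulow).
            { rewrite Rmult_0_r, Rplus_0_r. assert (k1 * ulow <= - ulow) by nra. unfold sat, Rmin, Rmax.
              repeat destruct Rle_dec; lra. }
            rewrite S. ring. }
        destruct (Hat _ _ Hs) as [L1 _].
        apply is_lim_unique in L1. rewrite Lim_const in L1. inversion L1; lra.
      * split; lra.
  - intros [Hk1 Hk2]. split.
    + apply stab; auto.
    + intros x1 x2 Hx. apply (attract w k1 k2 ubar ulow); auto.
Qed.
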